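(* Let $m\in\{1,2\}$ and $\gamma\in(1,2]$. Then $z_m<z_g$ and for every $z\in[z_m,z_g]$ one has $C(V_1;\gamma,z,P_6)<C_1$. Consequently any $z\in[z_m,z_M]$ with $C(V_1;\gamma,z,P_6)=C_1$ lies in $(z_g,z_M]$.
   Context: Fix $m\in\{1,2\}$. For $z>0$ put $\lambda=1+m\gamma z$, $a_1=1+\frac{m(\gamma-1)}{2}$, $a_2=\frac{m(\gamma-1)+mz\gamma(\gamma-3)}{2}$, $a_3=\frac{mz\gamma(\gamma-1)}{2}$, $G(V,C;\gamma,z)=C^2[(m+1)V+2mz]-V(1+V)(\lambda+V)$, $F(V,C;\gamma,z)=C\{C^2[1+\frac{mz}{1+V}]-a_1(1+V)^2+a_2(1+V)-a_3\}$; ODE $\frac{dC}{dV}=\frac FG$. $V_1=-\frac2{\gamma+1}$, $C_1=\frac{\sqrt{2\gamma(\gamma-1)}}{\gamma+1}$. $z_M=(\sqrt\gamma+\sqrt2)^{-2}$, $z_m=\frac{\gamma-1}{(2\gamma-1)(\gamma+1)}$; $w(z)=\sqrt{1-2(\gamma+2)z+(\gamma-2)^2z^2}$, $V_6=\frac{-1+(\gamma-2)z-w}{2}$, $C_6=1+V_6$, $P_6=(V_6,C_6)$. $z_g$: the value of $z$ with $V_6(z)=\frac{-2(1+m\gamma z)}{\gamma+1+m(\gamma-1)}$; explicitly $z_g=\frac{\sqrt{\gamma^2+(\gamma-1)^2}-\gamma}{\gamma(\gamma-1)}$ ($m=1$), $z_g=\frac{\sqrt{(2\gamma^2-\gamma+1)^2+2\gamma(\gamma-1)[4\gamma(\gamma-1)+8/3]}-(2\gamma^2-\gamma+1)}{\gamma[4\gamma(\gamma-1)+8/3]}$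 ($m=2$). For $z\in[z_m,z_M]$, $C(\cdot;\gamma,z,P_6):[V_1,V_6]\to(0,\infty)$ is the real-analytic solution of the ODE near $V_6$ with $C(V_6)=C_6$ and $C'(V_6)$ equal to the unique negative root of $-G_Cc^2+(F_C-G_V)c+F_V=0$ (partials at $P_6$), continued to $[V_1,V_6]$. *)

(* Defs.v *)
From Stdlib Require Import Reals Lra.
From Coquelicot Require Import Coquelicot.
Open Scope R_scope.

Section Defs.
Variables (m : nat) (gam z : R).
Let mr := INR m.

Definition lam : R := 1 + mr * gam * z.
Definition a1c : R := 1 + mr * (gam - 1) / 2.
Definition a2c : R := (mr * (gam - 1) + mr * z * gam * (gam - 3)) / 2.
Definition a3c : R := mr * z * gam * (gam - 1) / 2.

Definition Gf (V C : R) : R :=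
  C ^ 2 * ((mr + 1) * V + 2 * mr * z) - V * (1 + V) * (lam + V).
Definition Ff (V C : R) : R :=
  C * (C ^ 2 * (1 + mr * z / (1 + V)) - a1c * (1 + V) ^ 2 + a2c * (1 + V) - a3c).

Definition wz : R := sqrt (1 - 2 * (gam + 2) * z + (gam - 2) ^ 2 * z ^ 2).
Definition V6 : R := (-1 + (gam - 2) * z - wz) / 2.
Definition C6 : R := 1 + V6.

Definition GV6 : R := Derive (fun V => Gf V C6) V6.
Definition GC6 : R := Derive (fun C => Gf V6 C) C6.
Definition FV6 : R := Derive (fun V => Ff V C6) V6.
Definition FC6 : R := Derive (fun C => Ff V6 C) C6.

Definition neg_slope6 (c : R) : Prop :=
  c < 0 /\ - GC6 * c ^ 2 + (FC6 - GV6) * c + FV6 = 0.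

End Defs.

Definition V1g (gam : R) : R := - 2 / (gam + 1).
Definition C1g (gam : R) : R := sqrt (2 * gam * (gam - 1)) / (gam + 1).

Definition zM (gam : R) : R := / (sqrt gam + sqrt 2) ^ 2.
Definition zmin (gam : R) : R := (gam - 1) / ((2 * gam - 1) * (gam + 1)).

Definition zg (m : nat) (gam : R) : R :=
  if Nat.eqb m 1 then
    (sqrt (gam ^ 2 + (gam - 1) ^ 2) - gam) / (gam * (gam - 1))
  else
    (sqrt ((2 * gam ^ 2 - gam + 1) ^ 2
           + 2 * gam * (gam - 1) * (4 * gam * (gam - 1) + 8 / 3))
     - (2 * gam ^ 2 - gam + 1))
    / (gam * (4 * gam * (gam - 1) + 8 / 3)).

(* f is the solution C(.;gam,z,P6) on [V1,V6]: positive on [V1,V6],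
   real-analytic near V6 with f(V6) = C6 and f'(V6) the negative root,
   solving dC/dV = F/G on (V1,V6), and continuous at V1 from the right. *)
Definition is_C_P6 (m : nat) (gam z : R) (f : R -> R) : Prop :=
  (forall V, V1g gam <= V <= V6 gam z -> 0 < f V) /\
  (exists (r : R) (a : nat -> R), 0 < r /\
     (forall V, Rabs (V - V6 gam z) < r -> is_pseries a (V - V6 gam z) (f V))) /\
  f (V6 gam z) = C6 gam z /\
  (exists c, neg_slope6 m gam z c /\ is_derive f (V6 gam z) c) /\
  (forall V, V1g gam < V < V6 gam z ->
     Gf m gam z V (f V) <> 0 /\
     is_derive f V (Ff m gam z V (f V) / Gf m gam z V (f V))) /\
  filterlim f (at_right (V1g gam)) (locally (f (V1g gam))).

(* Main.v *)
Require Import Defs.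
From Stdlib Require Import Reals Lra Psatz.
From Coquelicot Require Import Coquelicot.
Open Scope R_scope.
Ltac nonneg_tac := repeat match goal with
  | |- 0 <= _ + _ => apply Rplus_le_le_0_compat
  | |- 0 <= _ * _ => apply Rmult_le_pos
  | |- 0 <= _ ^ _ => apply pow_le
  | |- _ => lra
  end.
Ltac strict_tac := repeat match goal with
  | |- 0 < _ * _ => apply Rmult_lt_0_compat
  | |- 0 < _ ^ _ => apply pow_lt
  | |- _ => lra
  end.
Definition SG1_m1 (t w v : R) : R :=
  - 28 - 28*w - 4*w*v - 128*t - 88*t*w - 26*t*w*v + 12*t*w^2 - 10*t*w^2*v - 2*t*w^2*v^2 - 218*t^2 - 62*t^2*w - 66*t^2*w*v + 43*t^2*w^2 - 37*t^2*w^2*v - 6*t^2*w^2*v^2 - 1*t^2*w^3 - 6*t^2*w^3*v - 1*t^2*w^3*v^2 - 166*t^3 + 28*t^3*w - 70*t^3*w*v + 24*t^3*w^2 - 20*t^3*w^2*v - 4*t^3*w^2*v^2 - 7*t^3*w^3 + 6*t^3*w^3*v + 1*t^3*w^3*v^2 - 50*t^4 + 30*t^4*w - 26*t^4*w*v - 7*t^4*w^2 + 7*t^4*w^2*v - 2*t^5.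
Lemma SG1_m1_sign (t w v : R) (Ht0: 0 < t) (Ht1: t <= 1) (Hw0: 0 < w) (Hw1: w <= 1) (Hv0: 0 < v) (Hv1: v < 1) : SG1_m1 t w v < 0.
Proof.
  assert (E : 1 * SG1_m1 t w v = - (648*t^5*w^3*(1-v)^2 + (592*t^5*(1-w)^3*(1-v)^2 + 1184*t^5*(1-w)^3*v*(1-v) + 592*t^5*(1-w)^3*v^2 + 1896*t^5*w*(1-w)^2*(1-v)^2 + 3984*t^5*w*(1-w)^2*v*(1-v) + 2088*t^5*w*(1-w)^2*v^2 + 1944*t^5*w^2*(1-w)*(1-v)^2 + 4332*t^5*w^2*(1-w)*v*(1-v) + 2400*t^5*w^2*(1-w)*v^2 + 1548*t^5*w^3*v*(1-v) + 912*t^5*w^3*v^2 + 1688*t^4*(1-t)*(1-w)^3*(1-v)^2 + 3376*t^4*(1-t)*(1-w)^3*v*(1-v) + 1688*t^4*(1-t)*(1-w)^3*v^2 + 5656*t^4*(1-t)*w*(1-w)^2*(1-v)^2 + 11800*t^4*(1-t)*w*(1-w)^2*v*(1-v) + 6144*t^4*(1-t)*w*(1-w)^2*v^2 + 6030*t^4*(1-t)*w^2*(1-w)*(1-v)^2 + 13220*t^4*(1-t)*w^2*(1-w)*v*(1-v) + 7224*t^4*(1-t)*w^2*(1-w)*v^2 + 2079*t^4*(1-t)*w^3*(1-v)^2 + 4836*t^4*(1-t)*w^3*v*(1-v) + 2792*t^4*(1-t)*w^3*v^2 + 1868*t^3*(1-t)^2*(1-w)^3*(1-v)^2 + 3736*t^3*(1-t)^2*(1-w)^3*v*(1-v)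 + 1868*t^3*(1-t)^2*(1-w)^3*v^2 + 6570*t^3*(1-t)^2*w*(1-w)^2*(1-v)^2 + 13604*t^3*(1-t)^2*w*(1-w)^2*v*(1-v) + 7034*t^3*(1-t)^2*w*(1-w)^2*v^2 + 7311*t^3*(1-t)^2*w^2*(1-w)*(1-v)^2 + 15741*t^3*(1-t)^2*w^2*(1-w)*v*(1-v) + 8464*t^3*(1-t)^2*w^2*(1-w)*v^2 + 2619*t^3*(1-t)^2*w^3*(1-v)^2 + 5905*t^3*(1-t)^2*w^3*v*(1-v) + 3322*t^3*(1-t)^2*w^3*v^2 + 1010*t^2*(1-t)^3*(1-w)^3*(1-v)^2 + 2020*t^2*(1-t)^3*(1-w)^3*v*(1-v) + 1010*t^2*(1-t)^3*(1-w)^3*v^2 + 3724*t^2*(1-t)^3*w*(1-w)^2*(1-v)^2 + 7658*t^2*(1-t)^3*w*(1-w)^2*v*(1-v) + 3934*t^2*(1-t)^3*w*(1-w)^2*v^2 + 4327*t^2*(1-t)^3*w^2*(1-w)*(1-v)^2 + 9151*t^2*(1-t)^3*w^2*(1-w)*v*(1-v) + 4838*t^2*(1-t)^3*w^2*(1-w)*v^2 + 1614*t^2*(1-t)^3*w^3*(1-v)^2 + 3521*t^2*(1-t)^3*w^3*v*(1-v) + 1922*t^2*(1-t)^3*w^3*v^2 + 268*t*(1-t)^4*(1-w)^3*(1-v)^2 + 536*t*(1-t)^4*(1-w)^3*v*(1-v) + 268*t*(1-t)^4*(1-w)^3*v^2 + 1032*t*(1-t)^4*w*(1-w)^2*(1-v)^2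 + 2110*t*(1-t)^4*w*(1-w)^2*v*(1-v) + 1078*t*(1-t)^4*w*(1-w)^2*v^2 + 1248*t*(1-t)^4*w^2*(1-w)*(1-v)^2 + 2598*t*(1-t)^4*w^2*(1-w)*v*(1-v) + 1352*t*(1-t)^4*w^2*(1-w)*v^2 + 484*t*(1-t)^4*w^3*(1-v)^2 + 1024*t*(1-t)^4*w^3*v*(1-v) + 542*t*(1-t)^4*w^3*v^2 + 28*(1-t)^5*(1-w)^3*(1-v)^2 + 56*(1-t)^5*(1-w)^3*v*(1-v) + 28*(1-t)^5*(1-w)^3*v^2 + 112*(1-t)^5*w*(1-w)^2*(1-v)^2 + 228*(1-t)^5*w*(1-w)^2*v*(1-v) + 116*(1-t)^5*w*(1-w)^2*v^2 + 140*(1-t)^5*w^2*(1-w)*(1-v)^2 + 288*(1-t)^5*w^2*(1-w)*v*(1-v) + 148*(1-t)^5*w^2*(1-w)*v^2 + 56*(1-t)^5*w^3*(1-v)^2 + 116*(1-t)^5*w^3*v*(1-v) + 60*(1-t)^5*w^3*v^2))) by (unfold SG1_m1; field).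
  assert (P : 0 < 648*t^5*w^3*(1-v)^2 + (592*t^5*(1-w)^3*(1-v)^2 + 1184*t^5*(1-w)^3*v*(1-v) + 592*t^5*(1-w)^3*v^2 + 1896*t^5*w*(1-w)^2*(1-v)^2 + 3984*t^5*w*(1-w)^2*v*(1-v) + 2088*t^5*w*(1-w)^2*v^2 + 1944*t^5*w^2*(1-w)*(1-v)^2 + 4332*t^5*w^2*(1-w)*v*(1-v) + 2400*t^5*w^2*(1-w)*v^2 + 1548*t^5*w^3*v*(1-v) + 912*t^5*w^3*v^2 + 1688*t^4*(1-t)*(1-w)^3*(1-v)^2 + 3376*t^4*(1-t)*(1-w)^3*v*(1-v) + 1688*t^4*(1-t)*(1-w)^3*v^2 + 5656*t^4*(1-t)*w*(1-w)^2*(1-v)^2 + 11800*t^4*(1-t)*w*(1-w)^2*v*(1-v) + 6144*t^4*(1-t)*w*(1-w)^2*v^2 + 6030*t^4*(1-t)*w^2*(1-w)*(1-v)^2 + 13220*t^4*(1-t)*w^2*(1-w)*v*(1-v) + 7224*t^4*(1-t)*w^2*(1-w)*v^2 + 2079*t^4*(1-t)*w^3*(1-v)^2 + 4836*t^4*(1-t)*w^3*v*(1-v) + 2792*t^4*(1-t)*w^3*v^2 + 1868*t^3*(1-t)^2*(1-w)^3*(1-v)^2 + 3736*t^3*(1-t)^2*(1-w)^3*v*(1-v) + 1868*t^3*(1-t)^2*(1-w)^3*v^2 + 6570*t^3*(1-t)^2*w*(1-w)^2*(1-v)^2 + 13604*t^3*(1-t)^2*w*(1-w)^2*v*(1-v)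 + 7034*t^3*(1-t)^2*w*(1-w)^2*v^2 + 7311*t^3*(1-t)^2*w^2*(1-w)*(1-v)^2 + 15741*t^3*(1-t)^2*w^2*(1-w)*v*(1-v) + 8464*t^3*(1-t)^2*w^2*(1-w)*v^2 + 2619*t^3*(1-t)^2*w^3*(1-v)^2 + 5905*t^3*(1-t)^2*w^3*v*(1-v) + 3322*t^3*(1-t)^2*w^3*v^2 + 1010*t^2*(1-t)^3*(1-w)^3*(1-v)^2 + 2020*t^2*(1-t)^3*(1-w)^3*v*(1-v) + 1010*t^2*(1-t)^3*(1-w)^3*v^2 + 3724*t^2*(1-t)^3*w*(1-w)^2*(1-v)^2 + 7658*t^2*(1-t)^3*w*(1-w)^2*v*(1-v) + 3934*t^2*(1-t)^3*w*(1-w)^2*v^2 + 4327*t^2*(1-t)^3*w^2*(1-w)*(1-v)^2 + 9151*t^2*(1-t)^3*w^2*(1-w)*v*(1-v) + 4838*t^2*(1-t)^3*w^2*(1-w)*v^2 + 1614*t^2*(1-t)^3*w^3*(1-v)^2 + 3521*t^2*(1-t)^3*w^3*v*(1-v) + 1922*t^2*(1-t)^3*w^3*v^2 + 268*t*(1-t)^4*(1-w)^3*(1-v)^2 + 536*t*(1-t)^4*(1-w)^3*v*(1-v) + 268*t*(1-t)^4*(1-w)^3*v^2 + 1032*t*(1-t)^4*w*(1-w)^2*(1-v)^2 + 2110*t*(1-t)^4*w*(1-w)^2*v*(1-v) + 1078*t*(1-t)^4*w*(1-w)^2*v^2 + 1248*t*(1-t)^4*w^2*(1-w)*(1-v)^2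 + 2598*t*(1-t)^4*w^2*(1-w)*v*(1-v) + 1352*t*(1-t)^4*w^2*(1-w)*v^2 + 484*t*(1-t)^4*w^3*(1-v)^2 + 1024*t*(1-t)^4*w^3*v*(1-v) + 542*t*(1-t)^4*w^3*v^2 + 28*(1-t)^5*(1-w)^3*(1-v)^2 + 56*(1-t)^5*(1-w)^3*v*(1-v) + 28*(1-t)^5*(1-w)^3*v^2 + 112*(1-t)^5*w*(1-w)^2*(1-v)^2 + 228*(1-t)^5*w*(1-w)^2*v*(1-v) + 116*(1-t)^5*w*(1-w)^2*v^2 + 140*(1-t)^5*w^2*(1-w)*(1-v)^2 + 288*(1-t)^5*w^2*(1-w)*v*(1-v) + 148*(1-t)^5*w^2*(1-w)*v^2 + 56*(1-t)^5*w^3*(1-v)^2 + 116*(1-t)^5*w^3*v*(1-v) + 60*(1-t)^5*w^3*v^2)) by (apply Rplus_lt_le_0_compat; [strict_tac | nonneg_tac]).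
  lra.
Qed.

Definition SH1_m1 (t w v : R) : R :=
  - 28 - 56*w + 24*w*v - 28*w^2 + 24*w^2*v + 4*w^2*v^2 - 142*t - 200*t*w + 106*t*w*v - 30*t*w^2 + 68*t*w^2*v + 18*t*w^2*v^2 + 28*t*w^3 - 14*t*w^3*v + 2*t*w^3*v^3 - 276*t^2 - 190*t^2*w + 149*t^2*w*v + 135*t^2*w^2 - 25*t^2*w^2*v + 32*t^2*w^2*v^2 + 76*t^2*w^3 - 87*t^2*w^3*v + 7*t^2*w^3*v^3 - 1*t^2*w^4 - 9*t^2*w^4*v + 1*t^2*w^4*v^2 + 1*t^2*w^4*v^3 - 243*t^3 + 72*t^3*w + 49*t^3*w*v + (477/2)*t^3*w^2 - (311/2)*t^3*w^2*v + 25*t^3*w^2*v^2 + 27*t^3*w^3 - 56*t^3*w^3*v - 6*t^3*w^3*v^2 + 7*t^3*w^3*v^3 - (21/2)*t^3*w^4 + (25/2)*t^3*w^4*v - (3/2)*t^3*w^4*v^2 - (1/2)*t^3*w^4*v^3 - 72*t^4 + 196*t^4*w - 47*t^4*w*v + (183/2)*t^4*w^2 - (167/2)*t^4*w^2*v + 6*t^4*w^2*v^2 - 22*t^4*w^3 + 18*t^4*w^3*v - 6*t^4*w^3*v^2 + 2*t^4*w^3*v^3 - (1/2)*t^4*w^4 + (1/2)*t^4*w^4*v + (1/2)*t^4*w^4*v^2 - (1/2)*t^4*w^4*v^3 + 24*t^5 + 80*t^5*w - 31*t^5*w*v - (21/2)*t^5*w^2 + (7/2)*t^5*w^2*v - 1*t^5*w^2*v^2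 - 1*t^5*w^3 + 1*t^5*w^3*v + 16*t^6 + 2*t^6*w - 2*t^6*w*v - (1/2)*t^6*w^2 + (1/2)*t^6*w^2*v + 1*t^7.
Lemma SH1_m1_sign (t w v : R) (Ht0: 0 < t) (Ht1: t <= 1) (Hw0: 0 < w) (Hw1: w <= 1) (Hv0: 0 < v) (Hv1: v < 1) : SH1_m1 t w v < 0.
Proof.
  assert (E : 2 * SH1_m1 t w v = - (648*t^7*w^4*(1-v)^3 + (7104*t^6*(1-t)*(1-w)^4*(1-v)^3 + 21312*t^6*(1-t)*(1-w)^4*v*(1-v)^2 + 21312*t^6*(1-t)*(1-w)^4*v^2*(1-v) + 7104*t^6*(1-t)*(1-w)^4*v^3 + 31424*t^6*(1-t)*w*(1-w)^3*(1-v)^3 + 91192*t^6*(1-t)*w*(1-w)^3*v*(1-v)^2 + 88112*t^6*(1-t)*w*(1-w)^3*v^2*(1-v) + 28344*t^6*(1-t)*w*(1-w)^3*v^3 + 48636*t^6*(1-t)*w^2*(1-w)^2*(1-v)^3 + 137496*t^6*(1-t)*w^2*(1-w)^2*v*(1-v)^2 + 128260*t^6*(1-t)*w^2*(1-w)^2*v^2*(1-v) + 39400*t^6*(1-t)*w^2*(1-w)^2*v^3 + 30240*t^6*(1-t)*w^3*(1-w)*(1-v)^3 + 84510*t^6*(1-t)*w^3*(1-w)*v*(1-v)^2 + 76736*t^6*(1-t)*w^3*(1-w)*v^2*(1-v) + 22304*t^6*(1-t)*w^3*(1-w)*v^3 + 6021*t^6*(1-t)*w^4*(1-v)^3 + 17172*t^6*(1-t)*w^4*v*(1-v)^2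 + 15540*t^6*(1-t)*w^4*v^2*(1-v) + 4224*t^6*(1-t)*w^4*v^3 + 1440*t^7*(1-w)^4*(1-v)^3 + 4320*t^7*(1-w)^4*v*(1-v)^2 + 4320*t^7*(1-w)^4*v^2*(1-v) + 1440*t^7*(1-w)^4*v^3 + 5952*t^7*w*(1-w)^3*(1-v)^3 + 17360*t^7*w*(1-w)^3*v*(1-v)^2 + 16864*t^7*w*(1-w)^3*v^2*(1-v) + 5456*t^7*w*(1-w)^3*v^3 + 8424*t^7*w^2*(1-w)^2*(1-v)^3 + 24120*t^7*w^2*(1-w)^2*v*(1-v)^2 + 22800*t^7*w^2*(1-w)^2*v^2*(1-v) + 7104*t^7*w^2*(1-w)^2*v^3 + 4536*t^7*w^3*(1-w)*(1-v)^3 + 13068*t^7*w^3*(1-w)*v*(1-v)^2 + 12216*t^7*w^3*(1-w)*v^2*(1-v) + 3648*t^7*w^3*(1-w)*v^3 + 2052*t^7*w^4*v*(1-v)^2 + 2016*t^7*w^4*v^2*(1-v) + 576*t^7*w^4*v^3 + 14256*t^5*(1-t)^2*(1-w)^4*(1-v)^3 + 42768*t^5*(1-t)^2*(1-w)^4*v*(1-v)^2 + 42768*t^5*(1-t)^2*(1-w)^4*v^2*(1-v) + 14256*t^5*(1-t)^2*(1-w)^4*v^3 + 66976*t^5*(1-t)^2*w*(1-w)^3*(1-v)^3 + 193516*t^5*(1-t)^2*w*(1-w)^3*v*(1-v)^2 + 186104*t^5*(1-t)^2*w*(1-w)^3*v^2*(1-v) + 59564*t^5*(1-t)^2*w*(1-w)^3*v^3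 + 111378*t^5*(1-t)^2*w^2*(1-w)^2*(1-v)^3 + 311710*t^5*(1-t)^2*w^2*(1-w)^2*v*(1-v)^2 + 287604*t^5*(1-t)^2*w^2*(1-w)^2*v^2*(1-v) + 87272*t^5*(1-t)^2*w^2*(1-w)^2*v^3 + 76302*t^5*(1-t)^2*w^3*(1-w)*(1-v)^3 + 209016*t^5*(1-t)^2*w^3*(1-w)*v*(1-v)^2 + 185870*t^5*(1-t)^2*w^3*(1-w)*v^2*(1-v) + 52860*t^5*(1-t)^2*w^3*(1-w)*v^3 + 17793*t^5*(1-t)^2*w^4*(1-v)^3 + 48528*t^5*(1-t)^2*w^4*v*(1-v)^2 + 42098*t^5*(1-t)^2*w^4*v^2*(1-v) + 11056*t^5*(1-t)^2*w^4*v^3 + 15248*t^4*(1-t)^3*(1-w)^4*(1-v)^3 + 45744*t^4*(1-t)^3*(1-w)^4*v*(1-v)^2 + 45744*t^4*(1-t)^3*(1-w)^4*v^2*(1-v) + 15248*t^4*(1-t)^3*(1-w)^4*v^3 + 75744*t^4*(1-t)^3*w*(1-w)^3*(1-v)^3 + 218034*t^4*(1-t)^3*w*(1-w)^3*v*(1-v)^2 + 208836*t^4*(1-t)^3*w*(1-w)^3*v^2*(1-v) + 66546*t^4*(1-t)^3*w*(1-w)^3*v^3 + 134113*t^4*(1-t)^3*w^2*(1-w)^2*(1-v)^3 + 372256*t^4*(1-t)^3*w^2*(1-w)^2*v*(1-v)^2 + 340321*t^4*(1-t)^3*w^2*(1-w)^2*v^2*(1-v) + 102178*t^4*(1-t)^3*w^2*(1-w)^2*v^3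 + 99174*t^4*(1-t)^3*w^3*(1-w)*(1-v)^3 + 267662*t^4*(1-t)^3*w^3*(1-w)*v*(1-v)^2 + 234158*t^4*(1-t)^3*w^3*(1-w)*v^2*(1-v) + 65390*t^4*(1-t)^3*w^3*(1-w)*v^3 + 25662*t^4*(1-t)^3*w^4*(1-v)^3 + 68090*t^4*(1-t)^3*w^4*v*(1-v)^2 + 57393*t^4*(1-t)^3*w^4*v^2*(1-v) + 14670*t^4*(1-t)^3*w^4*v^3 + 9466*t^3*(1-t)^4*(1-w)^4*(1-v)^3 + 28398*t^3*(1-t)^4*(1-w)^4*v*(1-v)^2 + 28398*t^3*(1-t)^4*(1-w)^4*v^2*(1-v) + 9466*t^3*(1-t)^4*(1-w)^4*v^3 + 49540*t^3*(1-t)^4*w*(1-w)^3*(1-v)^3 + 142172*t^3*(1-t)^4*w*(1-w)^3*v*(1-v)^2 + 135724*t^3*(1-t)^4*w*(1-w)^3*v^2*(1-v) + 43092*t^3*(1-t)^4*w*(1-w)^3*v^3 + 92857*t^3*(1-t)^4*w^2*(1-w)^2*(1-v)^3 + 256068*t^3*(1-t)^4*w^2*(1-w)^2*v*(1-v)^2 + 232375*t^3*(1-t)^4*w^2*(1-w)^2*v^2*(1-v) + 69164*t^3*(1-t)^4*w^2*(1-w)^2*v^3 + 73304*t^3*(1-t)^4*w^3*(1-w)*(1-v)^3 + 195652*t^3*(1-t)^4*w^3*(1-w)*v*(1-v)^2 + 169024*t^3*(1-t)^4*w^3*(1-w)*v^2*(1-v) + 46532*t^3*(1-t)^4*w^3*(1-w)*v^3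 + 20552*t^3*(1-t)^4*w^4*(1-v)^3 + 53516*t^3*(1-t)^4*w^4*v*(1-v)^2 + 44191*t^3*(1-t)^4*w^4*v^2*(1-v) + 11074*t^3*(1-t)^4*w^4*v^3 + 3432*t^2*(1-t)^5*(1-w)^4*(1-v)^3 + 10296*t^2*(1-t)^5*(1-w)^4*v*(1-v)^2 + 10296*t^2*(1-t)^5*(1-w)^4*v^2*(1-v) + 3432*t^2*(1-t)^5*(1-w)^4*v^3 + 18860*t^2*(1-t)^5*w*(1-w)^3*(1-v)^3 + 54002*t^2*(1-t)^5*w*(1-w)^3*v*(1-v)^2 + 51424*t^2*(1-t)^5*w*(1-w)^3*v^2*(1-v) + 16282*t^2*(1-t)^5*w*(1-w)^3*v^3 + 37254*t^2*(1-t)^5*w^2*(1-w)^2*(1-v)^3 + 102254*t^2*(1-t)^5*w^2*(1-w)^2*v*(1-v)^2 + 92298*t^2*(1-t)^5*w^2*(1-w)^2*v^2*(1-v) + 27298*t^2*(1-t)^5*w^2*(1-w)^2*v^3 + 31168*t^2*(1-t)^5*w^3*(1-w)*(1-v)^3 + 82564*t^2*(1-t)^5*w^3*(1-w)*v*(1-v)^2 + 70728*t^2*(1-t)^5*w^3*(1-w)*v^2*(1-v) + 19294*t^2*(1-t)^5*w^3*(1-w)*v^3 + 9344*t^2*(1-t)^5*w^4*(1-v)^3 + 24040*t^2*(1-t)^5*w^4*v*(1-v)^2 + 19598*t^2*(1-t)^5*w^4*v^2*(1-v) + 4862*t^2*(1-t)^5*w^4*v^3 + 676*t*(1-t)^6*(1-w)^4*(1-v)^3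 + 2028*t*(1-t)^6*(1-w)^4*v*(1-v)^2 + 2028*t*(1-t)^6*(1-w)^4*v^2*(1-v) + 676*t*(1-t)^6*(1-w)^4*v^3 + 3888*t*(1-t)^6*w*(1-w)^3*(1-v)^3 + 11116*t*(1-t)^6*w*(1-w)^3*v*(1-v)^2 + 10568*t*(1-t)^6*w*(1-w)^3*v^2*(1-v) + 3340*t*(1-t)^6*w*(1-w)^3*v^3 + 8060*t*(1-t)^6*w^2*(1-w)^2*(1-v)^3 + 22064*t*(1-t)^6*w^2*(1-w)^2*v*(1-v)^2 + 19856*t*(1-t)^6*w^2*(1-w)^2*v^2*(1-v) + 5852*t*(1-t)^6*w^2*(1-w)^2*v^3 + 7104*t*(1-t)^6*w^3*(1-w)*(1-v)^3 + 18752*t*(1-t)^6*w^3*(1-w)*v*(1-v)^2 + 16008*t*(1-t)^6*w^3*(1-w)*v^2*(1-v) + 4356*t*(1-t)^6*w^3*(1-w)*v^3 + 2256*t*(1-t)^6*w^4*(1-v)^3 + 5776*t*(1-t)^6*w^4*v*(1-v)^2 + 4692*t*(1-t)^6*w^4*v^2*(1-v) + 1168*t*(1-t)^6*w^4*v^3 + 56*(1-t)^7*(1-w)^4*(1-v)^3 + 168*(1-t)^7*(1-w)^4*v*(1-v)^2 + 168*(1-t)^7*(1-w)^4*v^2*(1-v) + 56*(1-t)^7*(1-w)^4*v^3 + 336*(1-t)^7*w*(1-w)^3*(1-v)^3 + 960*(1-t)^7*w*(1-w)^3*v*(1-v)^2 + 912*(1-t)^7*w*(1-w)^3*v^2*(1-v)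 + 288*(1-t)^7*w*(1-w)^3*v^3 + 728*(1-t)^7*w^2*(1-w)^2*(1-v)^3 + 1992*(1-t)^7*w^2*(1-w)^2*v*(1-v)^2 + 1792*(1-t)^7*w^2*(1-w)^2*v^2*(1-v) + 528*(1-t)^7*w^2*(1-w)^2*v^3 + 672*(1-t)^7*w^3*(1-w)*(1-v)^3 + 1776*(1-t)^7*w^3*(1-w)*v*(1-v)^2 + 1520*(1-t)^7*w^3*(1-w)*v^2*(1-v) + 416*(1-t)^7*w^3*(1-w)*v^3 + 224*(1-t)^7*w^4*(1-v)^3 + 576*(1-t)^7*w^4*v*(1-v)^2 + 472*(1-t)^7*w^4*v^2*(1-v) + 120*(1-t)^7*w^4*v^3))) by (unfold SH1_m1; field).
  assert (P : 0 < 648*t^7*w^4*(1-v)^3 + (7104*t^6*(1-t)*(1-w)^4*(1-v)^3 + 21312*t^6*(1-t)*(1-w)^4*v*(1-v)^2 + 21312*t^6*(1-t)*(1-w)^4*v^2*(1-v) + 7104*t^6*(1-t)*(1-w)^4*v^3 + 31424*t^6*(1-t)*w*(1-w)^3*(1-v)^3 + 91192*t^6*(1-t)*w*(1-w)^3*v*(1-v)^2 + 88112*t^6*(1-t)*w*(1-w)^3*v^2*(1-v) + 28344*t^6*(1-t)*w*(1-w)^3*v^3 + 48636*t^6*(1-t)*w^2*(1-w)^2*(1-v)^3 + 137496*t^6*(1-t)*w^2*(1-w)^2*v*(1-v)^2 + 128260*t^6*(1-t)*w^2*(1-w)^2*v^2*(1-v) + 39400*t^6*(1-t)*w^2*(1-w)^2*v^3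 + 30240*t^6*(1-t)*w^3*(1-w)*(1-v)^3 + 84510*t^6*(1-t)*w^3*(1-w)*v*(1-v)^2 + 76736*t^6*(1-t)*w^3*(1-w)*v^2*(1-v) + 22304*t^6*(1-t)*w^3*(1-w)*v^3 + 6021*t^6*(1-t)*w^4*(1-v)^3 + 17172*t^6*(1-t)*w^4*v*(1-v)^2 + 15540*t^6*(1-t)*w^4*v^2*(1-v) + 4224*t^6*(1-t)*w^4*v^3 + 1440*t^7*(1-w)^4*(1-v)^3 + 4320*t^7*(1-w)^4*v*(1-v)^2 + 4320*t^7*(1-w)^4*v^2*(1-v) + 1440*t^7*(1-w)^4*v^3 + 5952*t^7*w*(1-w)^3*(1-v)^3 + 17360*t^7*w*(1-w)^3*v*(1-v)^2 + 16864*t^7*w*(1-w)^3*v^2*(1-v) + 5456*t^7*w*(1-w)^3*v^3 + 8424*t^7*w^2*(1-w)^2*(1-v)^3 + 24120*t^7*w^2*(1-w)^2*v*(1-v)^2 + 22800*t^7*w^2*(1-w)^2*v^2*(1-v) + 7104*t^7*w^2*(1-w)^2*v^3 + 4536*t^7*w^3*(1-w)*(1-v)^3 + 13068*t^7*w^3*(1-w)*v*(1-v)^2 + 12216*t^7*w^3*(1-w)*v^2*(1-v) + 3648*t^7*w^3*(1-w)*v^3 + 2052*t^7*w^4*v*(1-v)^2 + 2016*t^7*w^4*v^2*(1-v) + 576*t^7*w^4*v^3 + 14256*t^5*(1-t)^2*(1-w)^4*(1-v)^3 + 42768*t^5*(1-t)^2*(1-w)^4*v*(1-v)^2 + 42768*t^5*(1-t)^2*(1-w)^4*v^2*(1-v)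 + 14256*t^5*(1-t)^2*(1-w)^4*v^3 + 66976*t^5*(1-t)^2*w*(1-w)^3*(1-v)^3 + 193516*t^5*(1-t)^2*w*(1-w)^3*v*(1-v)^2 + 186104*t^5*(1-t)^2*w*(1-w)^3*v^2*(1-v) + 59564*t^5*(1-t)^2*w*(1-w)^3*v^3 + 111378*t^5*(1-t)^2*w^2*(1-w)^2*(1-v)^3 + 311710*t^5*(1-t)^2*w^2*(1-w)^2*v*(1-v)^2 + 287604*t^5*(1-t)^2*w^2*(1-w)^2*v^2*(1-v) + 87272*t^5*(1-t)^2*w^2*(1-w)^2*v^3 + 76302*t^5*(1-t)^2*w^3*(1-w)*(1-v)^3 + 209016*t^5*(1-t)^2*w^3*(1-w)*v*(1-v)^2 + 185870*t^5*(1-t)^2*w^3*(1-w)*v^2*(1-v) + 52860*t^5*(1-t)^2*w^3*(1-w)*v^3 + 17793*t^5*(1-t)^2*w^4*(1-v)^3 + 48528*t^5*(1-t)^2*w^4*v*(1-v)^2 + 42098*t^5*(1-t)^2*w^4*v^2*(1-v) + 11056*t^5*(1-t)^2*w^4*v^3 + 15248*t^4*(1-t)^3*(1-w)^4*(1-v)^3 + 45744*t^4*(1-t)^3*(1-w)^4*v*(1-v)^2 + 45744*t^4*(1-t)^3*(1-w)^4*v^2*(1-v) + 15248*t^4*(1-t)^3*(1-w)^4*v^3 + 75744*t^4*(1-t)^3*w*(1-w)^3*(1-v)^3 + 218034*t^4*(1-t)^3*w*(1-w)^3*v*(1-v)^2 + 208836*t^4*(1-t)^3*w*(1-w)^3*v^2*(1-v)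 + 66546*t^4*(1-t)^3*w*(1-w)^3*v^3 + 134113*t^4*(1-t)^3*w^2*(1-w)^2*(1-v)^3 + 372256*t^4*(1-t)^3*w^2*(1-w)^2*v*(1-v)^2 + 340321*t^4*(1-t)^3*w^2*(1-w)^2*v^2*(1-v) + 102178*t^4*(1-t)^3*w^2*(1-w)^2*v^3 + 99174*t^4*(1-t)^3*w^3*(1-w)*(1-v)^3 + 267662*t^4*(1-t)^3*w^3*(1-w)*v*(1-v)^2 + 234158*t^4*(1-t)^3*w^3*(1-w)*v^2*(1-v) + 65390*t^4*(1-t)^3*w^3*(1-w)*v^3 + 25662*t^4*(1-t)^3*w^4*(1-v)^3 + 68090*t^4*(1-t)^3*w^4*v*(1-v)^2 + 57393*t^4*(1-t)^3*w^4*v^2*(1-v) + 14670*t^4*(1-t)^3*w^4*v^3 + 9466*t^3*(1-t)^4*(1-w)^4*(1-v)^3 + 28398*t^3*(1-t)^4*(1-w)^4*v*(1-v)^2 + 28398*t^3*(1-t)^4*(1-w)^4*v^2*(1-v) + 9466*t^3*(1-t)^4*(1-w)^4*v^3 + 49540*t^3*(1-t)^4*w*(1-w)^3*(1-v)^3 + 142172*t^3*(1-t)^4*w*(1-w)^3*v*(1-v)^2 + 135724*t^3*(1-t)^4*w*(1-w)^3*v^2*(1-v) + 43092*t^3*(1-t)^4*w*(1-w)^3*v^3 + 92857*t^3*(1-t)^4*w^2*(1-w)^2*(1-v)^3 + 256068*t^3*(1-t)^4*w^2*(1-w)^2*v*(1-v)^2 + 232375*t^3*(1-t)^4*w^2*(1-w)^2*v^2*(1-v)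 + 69164*t^3*(1-t)^4*w^2*(1-w)^2*v^3 + 73304*t^3*(1-t)^4*w^3*(1-w)*(1-v)^3 + 195652*t^3*(1-t)^4*w^3*(1-w)*v*(1-v)^2 + 169024*t^3*(1-t)^4*w^3*(1-w)*v^2*(1-v) + 46532*t^3*(1-t)^4*w^3*(1-w)*v^3 + 20552*t^3*(1-t)^4*w^4*(1-v)^3 + 53516*t^3*(1-t)^4*w^4*v*(1-v)^2 + 44191*t^3*(1-t)^4*w^4*v^2*(1-v) + 11074*t^3*(1-t)^4*w^4*v^3 + 3432*t^2*(1-t)^5*(1-w)^4*(1-v)^3 + 10296*t^2*(1-t)^5*(1-w)^4*v*(1-v)^2 + 10296*t^2*(1-t)^5*(1-w)^4*v^2*(1-v) + 3432*t^2*(1-t)^5*(1-w)^4*v^3 + 18860*t^2*(1-t)^5*w*(1-w)^3*(1-v)^3 + 54002*t^2*(1-t)^5*w*(1-w)^3*v*(1-v)^2 + 51424*t^2*(1-t)^5*w*(1-w)^3*v^2*(1-v) + 16282*t^2*(1-t)^5*w*(1-w)^3*v^3 + 37254*t^2*(1-t)^5*w^2*(1-w)^2*(1-v)^3 + 102254*t^2*(1-t)^5*w^2*(1-w)^2*v*(1-v)^2 + 92298*t^2*(1-t)^5*w^2*(1-w)^2*v^2*(1-v) + 27298*t^2*(1-t)^5*w^2*(1-w)^2*v^3 + 31168*t^2*(1-t)^5*w^3*(1-w)*(1-v)^3 + 82564*t^2*(1-t)^5*w^3*(1-w)*v*(1-v)^2 + 70728*t^2*(1-t)^5*w^3*(1-w)*v^2*(1-v)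 + 19294*t^2*(1-t)^5*w^3*(1-w)*v^3 + 9344*t^2*(1-t)^5*w^4*(1-v)^3 + 24040*t^2*(1-t)^5*w^4*v*(1-v)^2 + 19598*t^2*(1-t)^5*w^4*v^2*(1-v) + 4862*t^2*(1-t)^5*w^4*v^3 + 676*t*(1-t)^6*(1-w)^4*(1-v)^3 + 2028*t*(1-t)^6*(1-w)^4*v*(1-v)^2 + 2028*t*(1-t)^6*(1-w)^4*v^2*(1-v) + 676*t*(1-t)^6*(1-w)^4*v^3 + 3888*t*(1-t)^6*w*(1-w)^3*(1-v)^3 + 11116*t*(1-t)^6*w*(1-w)^3*v*(1-v)^2 + 10568*t*(1-t)^6*w*(1-w)^3*v^2*(1-v) + 3340*t*(1-t)^6*w*(1-w)^3*v^3 + 8060*t*(1-t)^6*w^2*(1-w)^2*(1-v)^3 + 22064*t*(1-t)^6*w^2*(1-w)^2*v*(1-v)^2 + 19856*t*(1-t)^6*w^2*(1-w)^2*v^2*(1-v) + 5852*t*(1-t)^6*w^2*(1-w)^2*v^3 + 7104*t*(1-t)^6*w^3*(1-w)*(1-v)^3 + 18752*t*(1-t)^6*w^3*(1-w)*v*(1-v)^2 + 16008*t*(1-t)^6*w^3*(1-w)*v^2*(1-v) + 4356*t*(1-t)^6*w^3*(1-w)*v^3 + 2256*t*(1-t)^6*w^4*(1-v)^3 + 5776*t*(1-t)^6*w^4*v*(1-v)^2 + 4692*t*(1-t)^6*w^4*v^2*(1-v) + 1168*t*(1-t)^6*w^4*v^3 + 56*(1-t)^7*(1-w)^4*(1-v)^3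 + 168*(1-t)^7*(1-w)^4*v*(1-v)^2 + 168*(1-t)^7*(1-w)^4*v^2*(1-v) + 56*(1-t)^7*(1-w)^4*v^3 + 336*(1-t)^7*w*(1-w)^3*(1-v)^3 + 960*(1-t)^7*w*(1-w)^3*v*(1-v)^2 + 912*(1-t)^7*w*(1-w)^3*v^2*(1-v) + 288*(1-t)^7*w*(1-w)^3*v^3 + 728*(1-t)^7*w^2*(1-w)^2*(1-v)^3 + 1992*(1-t)^7*w^2*(1-w)^2*v*(1-v)^2 + 1792*(1-t)^7*w^2*(1-w)^2*v^2*(1-v) + 528*(1-t)^7*w^2*(1-w)^2*v^3 + 672*(1-t)^7*w^3*(1-w)*(1-v)^3 + 1776*(1-t)^7*w^3*(1-w)*v*(1-v)^2 + 1520*(1-t)^7*w^3*(1-w)*v^2*(1-v) + 416*(1-t)^7*w^3*(1-w)*v^3 + 224*(1-t)^7*w^4*(1-v)^3 + 576*(1-t)^7*w^4*v*(1-v)^2 + 472*(1-t)^7*w^4*v^2*(1-v) + 120*(1-t)^7*w^4*v^3)) by (apply Rplus_lt_le_0_compat; [strict_tac | nonneg_tac]).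
  lra.
Qed.

Definition SGC_m1 (t w : R) : R :=
  - 16 - 48*w - 48*w^2 - 16*w^3 - 104*t - 256*t*w - 192*t*w^2 - 32*t*w^3 + 8*t*w^4 - 280*t^2 - 524*t^2*w - 228*t^2*w^2 + 44*t^2*w^3 + 28*t^2*w^4 - 400*t^3 - 496*t^3*w - 16*t^3*w^2 + 108*t^3*w^3 + 8*t^3*w^4 - 4*t^3*w^5 - 320*t^4 - 184*t^4*w + 120*t^4*w^2 + 36*t^4*w^3 - 12*t^4*w^4 - 136*t^5 + 16*t^5*w + 48*t^5*w^2 - 12*t^5*w^3 - 24*t^6 + 20*t^6*w - 4*t^6*w^2.
Lemma SGC_m1_sign (t w : R) (Ht0: 0 < t) (Ht1: t <= 1) (Hw0: 0 < w) (Hw1: w <= 1) : SGC_m1 t w < 0.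
Proof.
  assert (E : 1 * SGC_m1 t w = - (2916*t^6*w^5 + (1280*t^6*(1-w)^5 + 7872*t^6*w*(1-w)^4 + 19008*t^6*w^2*(1-w)^3 + 22464*t^6*w^3*(1-w)^2 + 12960*t^6*w^4*(1-w) + 3712*t^5*(1-t)*(1-w)^5 + 24064*t^5*(1-t)*w*(1-w)^4 + 61056*t^5*(1-t)*w^2*(1-w)^3 + 75600*t^5*(1-t)*w^3*(1-w)^2 + 45576*t^5*(1-t)*w^4*(1-w) + 10692*t^5*(1-t)*w^5 + 4480*t^4*(1-t)^2*(1-w)^5 + 30496*t^4*(1-t)^2*w*(1-w)^4 + 81120*t^4*(1-t)^2*w^2*(1-w)^3 + 105120*t^4*(1-t)^2*w^3*(1-w)^2 + 66204*t^4*(1-t)^2*w^4*(1-w) + 16200*t^4*(1-t)^2*w^5 + 2880*t^3*(1-t)^3*(1-w)^5 + 20512*t^3*(1-t)^3*w*(1-w)^4 + 57056*t^3*(1-t)^3*w^2*(1-w)^3 + 77252*t^3*(1-t)^3*w^3*(1-w)^2 + 50784*t^3*(1-t)^3*w^4*(1-w) + 12960*t^3*(1-t)^3*w^5 + 1040*t^2*(1-t)^4*(1-w)^5 + 7724*t^2*(1-t)^4*w*(1-w)^4 + 22404*t^2*(1-t)^4*w^2*(1-w)^3 + 31624*t^2*(1-t)^4*w^3*(1-w)^2 + 21664*t^2*(1-t)^4*w^4*(1-w) + 5760*t^2*(1-t)^4*w^5 + 200*t*(1-t)^5*(1-w)^5 + 1544*t*(1-t)^5*w*(1-w)^4 + 4656*t*(1-t)^5*w^2*(1-w)^3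 + 6832*t*(1-t)^5*w^3*(1-w)^2 + 4864*t*(1-t)^5*w^4*(1-w) + 1344*t*(1-t)^5*w^5 + 16*(1-t)^6*(1-w)^5 + 128*(1-t)^6*w*(1-w)^4 + 400*(1-t)^6*w^2*(1-w)^3 + 608*(1-t)^6*w^3*(1-w)^2 + 448*(1-t)^6*w^4*(1-w) + 128*(1-t)^6*w^5))) by (unfold SGC_m1; field).
  assert (P : 0 < 2916*t^6*w^5 + (1280*t^6*(1-w)^5 + 7872*t^6*w*(1-w)^4 + 19008*t^6*w^2*(1-w)^3 + 22464*t^6*w^3*(1-w)^2 + 12960*t^6*w^4*(1-w) + 3712*t^5*(1-t)*(1-w)^5 + 24064*t^5*(1-t)*w*(1-w)^4 + 61056*t^5*(1-t)*w^2*(1-w)^3 + 75600*t^5*(1-t)*w^3*(1-w)^2 + 45576*t^5*(1-t)*w^4*(1-w) + 10692*t^5*(1-t)*w^5 + 4480*t^4*(1-t)^2*(1-w)^5 + 30496*t^4*(1-t)^2*w*(1-w)^4 + 81120*t^4*(1-t)^2*w^2*(1-w)^3 + 105120*t^4*(1-t)^2*w^3*(1-w)^2 + 66204*t^4*(1-t)^2*w^4*(1-w) + 16200*t^4*(1-t)^2*w^5 + 2880*t^3*(1-t)^3*(1-w)^5 + 20512*t^3*(1-t)^3*w*(1-w)^4 + 57056*t^3*(1-t)^3*w^2*(1-w)^3 + 77252*t^3*(1-t)^3*w^3*(1-w)^2 + 50784*t^3*(1-t)^3*w^4*(1-w) + 12960*t^3*(1-t)^3*w^5 + 1040*t^2*(1-t)^4*(1-w)^5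 + 7724*t^2*(1-t)^4*w*(1-w)^4 + 22404*t^2*(1-t)^4*w^2*(1-w)^3 + 31624*t^2*(1-t)^4*w^3*(1-w)^2 + 21664*t^2*(1-t)^4*w^4*(1-w) + 5760*t^2*(1-t)^4*w^5 + 200*t*(1-t)^5*(1-w)^5 + 1544*t*(1-t)^5*w*(1-w)^4 + 4656*t*(1-t)^5*w^2*(1-w)^3 + 6832*t*(1-t)^5*w^3*(1-w)^2 + 4864*t*(1-t)^5*w^4*(1-w) + 1344*t*(1-t)^5*w^5 + 16*(1-t)^6*(1-w)^5 + 128*(1-t)^6*w*(1-w)^4 + 400*(1-t)^6*w^2*(1-w)^3 + 608*(1-t)^6*w^3*(1-w)^2 + 448*(1-t)^6*w^4*(1-w) + 128*(1-t)^6*w^5)) by (apply Rplus_lt_le_0_compat; [strict_tac | nonneg_tac]).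
  lra.
Qed.

Definition SFV_m1 (t w : R) : R :=
  - 6 - 26*w - 42*w^2 - 30*w^3 - 8*w^4 - 36*t - 132*t*w - 174*t*w^2 - 96*t*w^3 - 18*t*w^4 - 91*t^2 - 273*t^2*w - (555/2)*t^2*w^2 - (209/2)*t^2*w^3 - (15/2)*t^2*w^4 + (3/2)*t^2*w^5 - 125*t^3 - 292*t^3*w - 208*t^3*w^2 - (79/2)*t^3*w^3 + 4*t^3*w^4 + (1/2)*t^3*w^5 - 100*t^4 - 168*t^4*w - 69*t^4*w^2 + (1/2)*t^4*w^3 + (3/2)*t^4*w^4 - 46*t^5 - 48*t^5*w - 6*t^5*w^2 + (3/2)*t^5*w^3 - 11*t^6 - 5*t^6*w + (1/2)*t^6*w^2 - 1*t^7.
Lemma SFV_m1_sign (t w : R) (Ht0: 0 < t) (Ht1: t <= 1) (Hw0: 0 < w) (Hw1: w <= 1) : SFV_m1 t w < 0.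
Proof.
  assert (E : 2 * SFV_m1 t w = - (4860*t^7*w^5 + (5344*t^5*(1-t)^2*(1-w)^5 + 41840*t^5*(1-t)^2*w*(1-w)^4 + 129376*t^5*(1-t)^2*w^2*(1-w)^3 + 197226*t^5*(1-t)^2*w^3*(1-w)^2 + 147933*t^5*(1-t)^2*w^4*(1-w) + 43551*t^5*(1-t)^2*w^5 + 3232*t^6*(1-t)*(1-w)^5 + 24384*t^6*(1-t)*w*(1-w)^4 + 72768*t^6*(1-t)*w^2*(1-w)^3 + 107244*t^6*(1-t)*w^3*(1-w)^2 + 77922*t^6*(1-t)*w^4*(1-w) + 22275*t^6*(1-t)*w^5 + 832*t^7*(1-w)^5 + 6048*t^7*w*(1-w)^4 + 17424*t^7*w^2*(1-w)^3 + 24840*t^7*w^3*(1-w)^2 + 17496*t^7*w^4*(1-w) + 4880*t^4*(1-t)^3*(1-w)^5 + 39632*t^4*(1-t)^3*w*(1-w)^4 + 126980*t^4*(1-t)^3*w^2*(1-w)^3 + 200293*t^4*(1-t)^3*w^3*(1-w)^2 + 155169*t^4*(1-t)^3*w^4*(1-w) + 47070*t^4*(1-t)^3*w^5 + 2660*t^3*(1-t)^4*(1-w)^5 + 22394*t^3*(1-t)^4*w*(1-w)^4 + 74327*t^3*(1-t)^4*w^2*(1-w)^3 + 121321*t^3*(1-t)^4*w^3*(1-w)^2 + 97104*t^3*(1-t)^4*w^4*(1-w) + 30360*t^3*(1-t)^4*w^5 + 866*t^2*(1-t)^5*(1-w)^5 + 7552*t^2*(1-t)^5*w*(1-w)^4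 + 25955*t^2*(1-t)^5*w^2*(1-w)^3 + 43834*t^2*(1-t)^5*w^3*(1-w)^2 + 36248*t^2*(1-t)^5*w^4*(1-w) + 11680*t^2*(1-t)^5*w^5 + 156*t*(1-t)^6*(1-w)^5 + 1408*t*(1-t)^6*w*(1-w)^4 + 5008*t*(1-t)^6*w^2*(1-w)^3 + 8748*t*(1-t)^6*w^3*(1-w)^2 + 7472*t*(1-t)^6*w^4*(1-w) + 2480*t*(1-t)^6*w^5 + 12*(1-t)^7*(1-w)^5 + 112*(1-t)^7*w*(1-w)^4 + 412*(1-t)^7*w^2*(1-w)^3 + 744*(1-t)^7*w^3*(1-w)^2 + 656*(1-t)^7*w^4*(1-w) + 224*(1-t)^7*w^5))) by (unfold SFV_m1; field).
  assert (P : 0 < 4860*t^7*w^5 + (5344*t^5*(1-t)^2*(1-w)^5 + 41840*t^5*(1-t)^2*w*(1-w)^4 + 129376*t^5*(1-t)^2*w^2*(1-w)^3 + 197226*t^5*(1-t)^2*w^3*(1-w)^2 + 147933*t^5*(1-t)^2*w^4*(1-w) + 43551*t^5*(1-t)^2*w^5 + 3232*t^6*(1-t)*(1-w)^5 + 24384*t^6*(1-t)*w*(1-w)^4 + 72768*t^6*(1-t)*w^2*(1-w)^3 + 107244*t^6*(1-t)*w^3*(1-w)^2 + 77922*t^6*(1-t)*w^4*(1-w) + 22275*t^6*(1-t)*w^5 + 832*t^7*(1-w)^5 + 6048*t^7*w*(1-w)^4 + 17424*t^7*w^2*(1-w)^3 + 24840*t^7*w^3*(1-w)^2 + 17496*t^7*w^4*(1-w)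 + 4880*t^4*(1-t)^3*(1-w)^5 + 39632*t^4*(1-t)^3*w*(1-w)^4 + 126980*t^4*(1-t)^3*w^2*(1-w)^3 + 200293*t^4*(1-t)^3*w^3*(1-w)^2 + 155169*t^4*(1-t)^3*w^4*(1-w) + 47070*t^4*(1-t)^3*w^5 + 2660*t^3*(1-t)^4*(1-w)^5 + 22394*t^3*(1-t)^4*w*(1-w)^4 + 74327*t^3*(1-t)^4*w^2*(1-w)^3 + 121321*t^3*(1-t)^4*w^3*(1-w)^2 + 97104*t^3*(1-t)^4*w^4*(1-w) + 30360*t^3*(1-t)^4*w^5 + 866*t^2*(1-t)^5*(1-w)^5 + 7552*t^2*(1-t)^5*w*(1-w)^4 + 25955*t^2*(1-t)^5*w^2*(1-w)^3 + 43834*t^2*(1-t)^5*w^3*(1-w)^2 + 36248*t^2*(1-t)^5*w^4*(1-w) + 11680*t^2*(1-t)^5*w^5 + 156*t*(1-t)^6*(1-w)^5 + 1408*t*(1-t)^6*w*(1-w)^4 + 5008*t*(1-t)^6*w^2*(1-w)^3 + 8748*t*(1-t)^6*w^3*(1-w)^2 + 7472*t*(1-t)^6*w^4*(1-w) + 2480*t*(1-t)^6*w^5 + 12*(1-t)^7*(1-w)^5 + 112*(1-t)^7*w*(1-w)^4 + 412*(1-t)^7*w^2*(1-w)^3 + 744*(1-t)^7*w^3*(1-w)^2 + 656*(1-t)^7*w^4*(1-w) + 224*(1-t)^7*w^5)) by (apply Rplus_lt_le_0_compat; [strict_tac | nonneg_tac]).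
  lra.
Qed.

Definition SQ_m1 (t w : R) : R :=
  28 + 84*w + 84*w^2 + 28*w^3 + 170*t + 398*t*w + 258*t*w^2 + 2*t*w^3 - 28*t*w^4 + 418*t^2 + 666*t^2*w + 85*t^2*w^2 - 239*t^2*w^3 - 75*t^2*w^4 + 1*t^2*w^5 + 519*t^3 + 361*t^3*w - (891/2)*t^3*w^2 - (683/2)*t^3*w^3 - (31/2)*t^3*w^4 + (21/2)*t^3*w^5 + 315*t^4 - 196*t^4*w - 526*t^4*w^2 - (193/2)*t^4*w^3 + 33*t^4*w^4 + (1/2)*t^4*w^5 + 48*t^5 - 300*t^5*w - 161*t^5*w^2 + (67/2)*t^5*w^3 + (3/2)*t^5*w^4 - 40*t^6 - 98*t^6*w + 9*t^6*w^2 + (3/2)*t^6*w^3 - 17*t^7 - 3*t^7*w + (1/2)*t^7*w^2 - 1*t^8.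
Lemma SQ_m1_sign (t w : R) (Ht0: 0 < t) (Ht1: t <= 1) (Hw0: 0 < w) (Hw1: w <= 1) : SQ_m1 t w > 0.
Proof.
  assert (E : 2 * SQ_m1 t w = 1944*t^8*w^5 + (35616*t^6*(1-t)^2*(1-w)^5 + 222352*t^6*(1-t)^2*w*(1-w)^4 + 535168*t^6*(1-t)^2*w^2*(1-w)^3 + 614250*t^6*(1-t)^2*w^3*(1-w)^2 + 330993*t^6*(1-t)^2*w^4*(1-w) + 65421*t^6*(1-t)^2*w^5 + 15648*t^7*(1-t)*(1-w)^5 + 92992*t^7*(1-t)*w*(1-w)^4 + 211872*t^7*(1-t)*w^2*(1-w)^3 + 227772*t^7*(1-t)*w^3*(1-w)^2 + 112482*t^7*(1-t)*w^4*(1-w) + 19359*t^7*(1-t)*w^5 + 2880*t^8*(1-w)^5 + 16224*t^8*w*(1-w)^4 + 34704*t^8*w^2*(1-w)^3 + 34344*t^8*w^3*(1-w)^2 + 14904*t^8*w^4*(1-w) + 44752*t^5*(1-t)^3*(1-w)^5 + 292720*t^5*(1-t)^3*w*(1-w)^4 + 740788*t^5*(1-t)^3*w^2*(1-w)^3 + 899745*t^5*(1-t)^3*w^3*(1-w)^2 + 519243*t^5*(1-t)^3*w^4*(1-w) + 112572*t^5*(1-t)^3*w^5 + 34180*t^4*(1-t)^4*(1-w)^5 + 233718*t^4*(1-t)^4*w*(1-w)^4 + 619935*t^4*(1-t)^4*w^2*(1-w)^3 + 792579*t^4*(1-t)^4*w^3*(1-w)^2 + 485026*t^4*(1-t)^4*w^4*(1-w)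 + 112980*t^4*(1-t)^4*w^5 + 16330*t^3*(1-t)^5*(1-w)^5 + 116488*t^3*(1-t)^5*w*(1-w)^4 + 323025*t^3*(1-t)^5*w^2*(1-w)^3 + 433116*t^3*(1-t)^5*w^3*(1-w)^2 + 279352*t^3*(1-t)^5*w^4*(1-w) + 69136*t^3*(1-t)^5*w^5 + 4784*t^2*(1-t)^6*(1-w)^5 + 35528*t^2*(1-t)^6*w*(1-w)^4 + 102758*t^2*(1-t)^6*w^2*(1-w)^3 + 144064*t^2*(1-t)^6*w^3*(1-w)^2 + 97504*t^2*(1-t)^6*w^4*(1-w) + 25456*t^2*(1-t)^6*w^5 + 788*t*(1-t)^7*(1-w)^5 + 6080*t*(1-t)^7*w*(1-w)^4 + 18300*t*(1-t)^7*w^2*(1-w)^3 + 26752*t*(1-t)^7*w^3*(1-w)^2 + 18928*t*(1-t)^7*w^4*(1-w) + 5184*t*(1-t)^7*w^5 + 56*(1-t)^8*(1-w)^5 + 448*(1-t)^8*w*(1-w)^4 + 1400*(1-t)^8*w^2*(1-w)^3 + 2128*(1-t)^8*w^3*(1-w)^2 + 1568*(1-t)^8*w^4*(1-w) + 448*(1-t)^8*w^5)) by (unfold SQ_m1; field).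
  assert (P : 0 < 1944*t^8*w^5 + (35616*t^6*(1-t)^2*(1-w)^5 + 222352*t^6*(1-t)^2*w*(1-w)^4 + 535168*t^6*(1-t)^2*w^2*(1-w)^3 + 614250*t^6*(1-t)^2*w^3*(1-w)^2 + 330993*t^6*(1-t)^2*w^4*(1-w) + 65421*t^6*(1-t)^2*w^5 + 15648*t^7*(1-t)*(1-w)^5 + 92992*t^7*(1-t)*w*(1-w)^4 + 211872*t^7*(1-t)*w^2*(1-w)^3 + 227772*t^7*(1-t)*w^3*(1-w)^2 + 112482*t^7*(1-t)*w^4*(1-w) + 19359*t^7*(1-t)*w^5 + 2880*t^8*(1-w)^5 + 16224*t^8*w*(1-w)^4 + 34704*t^8*w^2*(1-w)^3 + 34344*t^8*w^3*(1-w)^2 + 14904*t^8*w^4*(1-w) + 44752*t^5*(1-t)^3*(1-w)^5 + 292720*t^5*(1-t)^3*w*(1-w)^4 + 740788*t^5*(1-t)^3*w^2*(1-w)^3 + 899745*t^5*(1-t)^3*w^3*(1-w)^2 + 519243*t^5*(1-t)^3*w^4*(1-w) + 112572*t^5*(1-t)^3*w^5 + 34180*t^4*(1-t)^4*(1-w)^5 + 233718*t^4*(1-t)^4*w*(1-w)^4 + 619935*t^4*(1-t)^4*w^2*(1-w)^3 + 792579*t^4*(1-t)^4*w^3*(1-w)^2 + 485026*t^4*(1-t)^4*w^4*(1-w) + 112980*t^4*(1-t)^4*w^5 + 16330*t^3*(1-t)^5*(1-w)^5 + 116488*t^3*(1-t)^5*w*(1-w)^4 + 323025*t^3*(1-t)^5*w^2*(1-w)^3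 + 433116*t^3*(1-t)^5*w^3*(1-w)^2 + 279352*t^3*(1-t)^5*w^4*(1-w) + 69136*t^3*(1-t)^5*w^5 + 4784*t^2*(1-t)^6*(1-w)^5 + 35528*t^2*(1-t)^6*w*(1-w)^4 + 102758*t^2*(1-t)^6*w^2*(1-w)^3 + 144064*t^2*(1-t)^6*w^3*(1-w)^2 + 97504*t^2*(1-t)^6*w^4*(1-w) + 25456*t^2*(1-t)^6*w^5 + 788*t*(1-t)^7*(1-w)^5 + 6080*t*(1-t)^7*w*(1-w)^4 + 18300*t*(1-t)^7*w^2*(1-w)^3 + 26752*t*(1-t)^7*w^3*(1-w)^2 + 18928*t*(1-t)^7*w^4*(1-w) + 5184*t*(1-t)^7*w^5 + 56*(1-t)^8*(1-w)^5 + 448*(1-t)^8*w*(1-w)^4 + 1400*(1-t)^8*w^2*(1-w)^3 + 2128*(1-t)^8*w^3*(1-w)^2 + 1568*(1-t)^8*w^4*(1-w) + 448*(1-t)^8*w^5)) by (apply Rplus_lt_le_0_compat; [strict_tac | nonneg_tac]).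
  lra.
Qed.

Definition SG1_m2 (t w v : R) : R :=
  - 40 - 40*w - 8*w*v - 176*t - 112*t*w - 44*t*w*v + 24*t*w^2 - 12*t*w^2*v - 4*t*w^2*v^2 - 292*t^2 - 68*t^2*w - 100*t^2*w*v + 58*t^2*w^2 - 46*t^2*w^2*v - 12*t^2*w^2*v^2 - 6*t^2*w^3 - 8*t^2*w^3*v - 2*t^2*w^3*v^2 - 220*t^3 + 40*t^3*w - 100*t^3*w*v + 24*t^3*w^2 - 24*t^3*w^2*v - 8*t^3*w^2*v^2 - 10*t^3*w^3 + 8*t^3*w^3*v + 2*t^3*w^3*v^2 - 68*t^4 + 36*t^4*w - 36*t^4*w*v - 10*t^4*w^2 + 10*t^4*w^2*v - 4*t^5.
Lemma SG1_m2_sign (t w v : R) (Ht0: 0 < t) (Ht1: t <= 1) (Hw0: 0 < w) (Hw1: w <= 1) (Hv0: 0 < v) (Hv1: v < 1) : SG1_m2 t w v < 0.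
Proof.
  assert (E : 1 * SG1_m2 t w v = - (864*t^5*w^3*(1-v)^2 + (800*t^5*(1-w)^3*(1-v)^2 + 1600*t^5*(1-w)^3*v*(1-v) + 800*t^5*(1-w)^3*v^2 + 2544*t^5*w*(1-w)^2*(1-v)^2 + 5376*t^5*w*(1-w)^2*v*(1-v) + 2832*t^5*w*(1-w)^2*v^2 + 2592*t^5*w^2*(1-w)*(1-v)^2 + 5832*t^5*w^2*(1-w)*v*(1-v) + 3264*t^5*w^2*(1-w)*v^2 + 2088*t^5*w^3*v*(1-v) + 1248*t^5*w^3*v^2 + 2288*t^4*(1-t)*(1-w)^3*(1-v)^2 + 4576*t^4*(1-t)*(1-w)^3*v*(1-v) + 2288*t^4*(1-t)*(1-w)^3*v^2 + 7600*t^4*(1-t)*w*(1-w)^2*(1-v)^2 + 15952*t^4*(1-t)*w*(1-w)^2*v*(1-v) + 8352*t^4*(1-t)*w*(1-w)^2*v^2 + 8028*t^4*(1-t)*w^2*(1-w)*(1-v)^2 + 17784*t^4*(1-t)*w^2*(1-w)*v*(1-v) + 9824*t^4*(1-t)*w^2*(1-w)*v^2 + 2754*t^4*(1-t)*w^3*(1-v)^2 + 6492*t^4*(1-t)*w^3*v*(1-v) + 3808*t^4*(1-t)*w^3*v^2 + 2552*t^3*(1-t)^2*(1-w)^3*(1-v)^2 + 5104*t^3*(1-t)^2*(1-w)^3*v*(1-v) + 2552*t^3*(1-t)^2*(1-w)^3*v^2 + 8892*t^3*(1-t)^2*w*(1-w)^2*(1-v)^2 + 18528*t^3*(1-t)^2*w*(1-w)^2*v*(1-v)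 + 9636*t^3*(1-t)^2*w*(1-w)^2*v^2 + 9786*t^3*(1-t)^2*w^2*(1-w)*(1-v)^2 + 21294*t^3*(1-t)^2*w^2*(1-w)*v*(1-v) + 11576*t^3*(1-t)^2*w^2*(1-w)*v^2 + 3474*t^3*(1-t)^2*w^3*(1-v)^2 + 7942*t^3*(1-t)^2*w^3*v*(1-v) + 4540*t^3*(1-t)^2*w^3*v^2 + 1396*t^2*(1-t)^3*(1-w)^3*(1-v)^2 + 2792*t^2*(1-t)^3*(1-w)^3*v*(1-v) + 1396*t^2*(1-t)^3*(1-w)^3*v^2 + 5104*t^2*(1-t)^3*w*(1-w)^2*(1-v)^2 + 10564*t^2*(1-t)^3*w*(1-w)^2*v*(1-v) + 5460*t^2*(1-t)^3*w*(1-w)^2*v^2 + 5866*t^2*(1-t)^3*w^2*(1-w)*(1-v)^2 + 12538*t^2*(1-t)^3*w^2*(1-w)*v*(1-v) + 6700*t^2*(1-t)^3*w^2*(1-w)*v^2 + 2164*t^2*(1-t)^3*w^3*(1-v)^2 + 4786*t^2*(1-t)^3*w^3*v*(1-v) + 2652*t^2*(1-t)^3*w^3*v^2 + 376*t*(1-t)^4*(1-w)^3*(1-v)^2 + 752*t*(1-t)^4*(1-w)^3*v*(1-v) + 376*t*(1-t)^4*(1-w)^3*v^2 + 1440*t*(1-t)^4*w*(1-w)^2*(1-v)^2 + 2964*t*(1-t)^4*w*(1-w)^2*v*(1-v) + 1524*t*(1-t)^4*w*(1-w)^2*v^2 + 1728*t*(1-t)^4*w^2*(1-w)*(1-v)^2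 + 3636*t*(1-t)^4*w^2*(1-w)*v*(1-v) + 1912*t*(1-t)^4*w^2*(1-w)*v^2 + 664*t*(1-t)^4*w^3*(1-v)^2 + 1424*t*(1-t)^4*w^3*v*(1-v) + 764*t*(1-t)^4*w^3*v^2 + 328*(1-t)^5*w*(1-w)^2*v*(1-v) + 168*(1-t)^5*w*(1-w)^2*v^2 + 416*(1-t)^5*w^2*(1-w)*v*(1-v) + 216*(1-t)^5*w^2*(1-w)*v^2 + 168*(1-t)^5*w^3*v*(1-v) + 88*(1-t)^5*w^3*v^2 + 40*(1-t)^5*(1-w)^3*(1-v)^2 + 80*(1-t)^5*(1-w)^3*v*(1-v) + 40*(1-t)^5*(1-w)^3*v^2 + 160*(1-t)^5*w*(1-w)^2*(1-v)^2 + 200*(1-t)^5*w^2*(1-w)*(1-v)^2 + 80*(1-t)^5*w^3*(1-v)^2))) by (unfold SG1_m2; field).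
  assert (P : 0 < 864*t^5*w^3*(1-v)^2 + (800*t^5*(1-w)^3*(1-v)^2 + 1600*t^5*(1-w)^3*v*(1-v) + 800*t^5*(1-w)^3*v^2 + 2544*t^5*w*(1-w)^2*(1-v)^2 + 5376*t^5*w*(1-w)^2*v*(1-v) + 2832*t^5*w*(1-w)^2*v^2 + 2592*t^5*w^2*(1-w)*(1-v)^2 + 5832*t^5*w^2*(1-w)*v*(1-v) + 3264*t^5*w^2*(1-w)*v^2 + 2088*t^5*w^3*v*(1-v) + 1248*t^5*w^3*v^2 + 2288*t^4*(1-t)*(1-w)^3*(1-v)^2 + 4576*t^4*(1-t)*(1-w)^3*v*(1-v) + 2288*t^4*(1-t)*(1-w)^3*v^2 + 7600*t^4*(1-t)*w*(1-w)^2*(1-v)^2 + 15952*t^4*(1-t)*w*(1-w)^2*v*(1-v) + 8352*t^4*(1-t)*w*(1-w)^2*v^2 + 8028*t^4*(1-t)*w^2*(1-w)*(1-v)^2 + 17784*t^4*(1-t)*w^2*(1-w)*v*(1-v) + 9824*t^4*(1-t)*w^2*(1-w)*v^2 + 2754*t^4*(1-t)*w^3*(1-v)^2 + 6492*t^4*(1-t)*w^3*v*(1-v) + 3808*t^4*(1-t)*w^3*v^2 + 2552*t^3*(1-t)^2*(1-w)^3*(1-v)^2 + 5104*t^3*(1-t)^2*(1-w)^3*v*(1-v) + 2552*t^3*(1-t)^2*(1-w)^3*v^2 + 8892*t^3*(1-t)^2*w*(1-w)^2*(1-v)^2 + 18528*t^3*(1-t)^2*w*(1-w)^2*v*(1-v)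 + 9636*t^3*(1-t)^2*w*(1-w)^2*v^2 + 9786*t^3*(1-t)^2*w^2*(1-w)*(1-v)^2 + 21294*t^3*(1-t)^2*w^2*(1-w)*v*(1-v) + 11576*t^3*(1-t)^2*w^2*(1-w)*v^2 + 3474*t^3*(1-t)^2*w^3*(1-v)^2 + 7942*t^3*(1-t)^2*w^3*v*(1-v) + 4540*t^3*(1-t)^2*w^3*v^2 + 1396*t^2*(1-t)^3*(1-w)^3*(1-v)^2 + 2792*t^2*(1-t)^3*(1-w)^3*v*(1-v) + 1396*t^2*(1-t)^3*(1-w)^3*v^2 + 5104*t^2*(1-t)^3*w*(1-w)^2*(1-v)^2 + 10564*t^2*(1-t)^3*w*(1-w)^2*v*(1-v) + 5460*t^2*(1-t)^3*w*(1-w)^2*v^2 + 5866*t^2*(1-t)^3*w^2*(1-w)*(1-v)^2 + 12538*t^2*(1-t)^3*w^2*(1-w)*v*(1-v) + 6700*t^2*(1-t)^3*w^2*(1-w)*v^2 + 2164*t^2*(1-t)^3*w^3*(1-v)^2 + 4786*t^2*(1-t)^3*w^3*v*(1-v) + 2652*t^2*(1-t)^3*w^3*v^2 + 376*t*(1-t)^4*(1-w)^3*(1-v)^2 + 752*t*(1-t)^4*(1-w)^3*v*(1-v) + 376*t*(1-t)^4*(1-w)^3*v^2 + 1440*t*(1-t)^4*w*(1-w)^2*(1-v)^2 + 2964*t*(1-t)^4*w*(1-w)^2*v*(1-v) + 1524*t*(1-t)^4*w*(1-w)^2*v^2 + 1728*t*(1-t)^4*w^2*(1-w)*(1-v)^2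 + 3636*t*(1-t)^4*w^2*(1-w)*v*(1-v) + 1912*t*(1-t)^4*w^2*(1-w)*v^2 + 664*t*(1-t)^4*w^3*(1-v)^2 + 1424*t*(1-t)^4*w^3*v*(1-v) + 764*t*(1-t)^4*w^3*v^2 + 328*(1-t)^5*w*(1-w)^2*v*(1-v) + 168*(1-t)^5*w*(1-w)^2*v^2 + 416*(1-t)^5*w^2*(1-w)*v*(1-v) + 216*(1-t)^5*w^2*(1-w)*v^2 + 168*(1-t)^5*w^3*v*(1-v) + 88*(1-t)^5*w^3*v^2 + 40*(1-t)^5*(1-w)^3*(1-v)^2 + 80*(1-t)^5*(1-w)^3*v*(1-v) + 40*(1-t)^5*(1-w)^3*v^2 + 160*(1-t)^5*w*(1-w)^2*(1-v)^2 + 200*(1-t)^5*w^2*(1-w)*(1-v)^2 + 80*(1-t)^5*w^3*(1-v)^2)) by (apply Rplus_lt_le_0_compat; [strict_tac | nonneg_tac]).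
  lra.
Qed.

Definition SH1_m2 (t w v : R) : R :=
  - 40 - 80*w + 32*w*v - 40*w^2 + 32*w^2*v + 8*w^2*v^2 - 196*t - 264*t*w + 140*t*w*v - 20*t*w^2 + 88*t*w^2*v + 36*t*w^2*v^2 + 48*t*w^3 - 20*t*w^3*v + 4*t*w^3*v^3 - 376*t^2 - 240*t^2*w + 194*t^2*w*v + 190*t^2*w^2 - 38*t^2*w^2*v + 64*t^2*w^2*v^2 + 84*t^2*w^3 - 114*t^2*w^3*v + 14*t^2*w^3*v^3 - 10*t^2*w^4 - 10*t^2*w^4*v + 2*t^2*w^4*v^2 + 2*t^2*w^4*v^3 - 342*t^3 + 72*t^3*w + 58*t^3*w*v + 277*t^3*w^2 - 211*t^3*w^2*v + 50*t^3*w^2*v^2 + 14*t^3*w^3 - 72*t^3*w^3*v - 12*t^3*w^3*v^2 + 14*t^3*w^3*v^3 - 13*t^3*w^4 + 17*t^3*w^4*v - 3*t^3*w^4*v^2 - 1*t^3*w^4*v^3 - 128*t^4 + 216*t^4*w - 70*t^4*w*v + 103*t^4*w^2 - 115*t^4*w^2*v + 12*t^4*w^2*v^2 - 24*t^4*w^3 + 24*t^4*w^3*v - 12*t^4*w^3*v^2 + 4*t^4*w^3*v^3 - 1*t^4*w^4 + 1*t^4*w^4*v + 1*t^4*w^4*v^2 - 1*t^4*w^4*v^3 + 8*t^5 + 96*t^5*w - 46*t^5*w*v - 5*t^5*w^2 + 3*t^5*w^2*v - 2*t^5*w^2*v^2 - 2*t^5*w^3 + 2*t^5*w^3*v + 16*t^6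 + 8*t^6*w - 4*t^6*w*v - 1*t^6*w^2 + 1*t^6*w^2*v + 2*t^7.
Lemma SH1_m2_sign (t w v : R) (Ht0: 0 < t) (Ht1: t <= 1) (Hw0: 0 < w) (Hw1: w <= 1) (Hv0: 0 < v) (Hv1: v < 1) : SH1_m2 t w v < 0.
Proof.
  assert (E : 1 * SH1_m2 t w v = - (648*t^7*w^4*(1-v)^3 + (5056*t^6*(1-t)*(1-w)^4*(1-v)^3 + 15168*t^6*(1-t)*(1-w)^4*v*(1-v)^2 + 15168*t^6*(1-t)*(1-w)^4*v^2*(1-v) + 5056*t^6*(1-t)*(1-w)^4*v^3 + 22432*t^6*(1-t)*w*(1-w)^3*(1-v)^3 + 65336*t^6*(1-t)*w*(1-w)^3*v*(1-v)^2 + 63376*t^6*(1-t)*w*(1-w)^3*v^2*(1-v) + 20472*t^6*(1-t)*w*(1-w)^3*v^3 + 35004*t^6*(1-t)*w^2*(1-w)^2*(1-v)^3 + 99752*t^6*(1-t)*w^2*(1-w)^2*v*(1-v)^2 + 93668*t^6*(1-t)*w^2*(1-w)^2*v^2*(1-v) + 28920*t^6*(1-t)*w^2*(1-w)^2*v^3 + 22248*t^6*(1-t)*w^3*(1-w)*(1-v)^3 + 63006*t^6*(1-t)*w^3*(1-w)*v*(1-v)^2 + 57704*t^6*(1-t)*w^3*(1-w)*v^2*(1-v) + 16784*t^6*(1-t)*w^3*(1-w)*v^3 + 4725*t^6*(1-t)*w^4*(1-v)^3 + 13716*t^6*(1-t)*w^4*v*(1-v)^2 + 12516*t^6*(1-t)*w^4*v^2*(1-v)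 + 3360*t^6*(1-t)*w^4*v^3 + 1056*t^7*(1-w)^4*(1-v)^3 + 3168*t^7*(1-w)^4*v*(1-v)^2 + 3168*t^7*(1-w)^4*v^2*(1-v) + 1056*t^7*(1-w)^4*v^3 + 4416*t^7*w*(1-w)^3*(1-v)^3 + 12944*t^7*w*(1-w)^3*v*(1-v)^2 + 12640*t^7*w*(1-w)^3*v^2*(1-v) + 4112*t^7*w*(1-w)^3*v^3 + 6408*t^7*w^2*(1-w)^2*(1-v)^3 + 18552*t^7*w^2*(1-w)^2*v*(1-v)^2 + 17712*t^7*w^2*(1-w)^2*v^2*(1-v) + 5568*t^7*w^2*(1-w)^2*v^3 + 3672*t^7*w^3*(1-w)*(1-v)^3 + 10764*t^7*w^3*(1-w)*v*(1-v)^2 + 10200*t^7*w^3*(1-w)*v^2*(1-v) + 3072*t^7*w^3*(1-w)*v^3 + 2052*t^7*w^4*v*(1-v)^2 + 2016*t^7*w^4*v^2*(1-v) + 576*t^7*w^4*v^3 + 9968*t^5*(1-t)^2*(1-w)^4*(1-v)^3 + 29904*t^5*(1-t)^2*(1-w)^4*v*(1-v)^2 + 29904*t^5*(1-t)^2*(1-w)^4*v^2*(1-v) + 9968*t^5*(1-t)^2*(1-w)^4*v^3 + 46736*t^5*(1-t)^2*w*(1-w)^3*(1-v)^3 + 135404*t^5*(1-t)^2*w*(1-w)^3*v*(1-v)^2 + 130600*t^5*(1-t)^2*w*(1-w)^3*v^2*(1-v) + 41932*t^5*(1-t)^2*w*(1-w)^3*v^3 + 77674*t^5*(1-t)^2*w^2*(1-w)^2*(1-v)^3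 + 218606*t^5*(1-t)^2*w^2*(1-w)^2*v*(1-v)^2 + 202508*t^5*(1-t)^2*w^2*(1-w)^2*v^2*(1-v) + 61576*t^5*(1-t)^2*w^2*(1-w)^2*v^3 + 53442*t^5*(1-t)^2*w^3*(1-w)*(1-v)^3 + 147704*t^5*(1-t)^2*w^3*(1-w)*v*(1-v)^2 + 131826*t^5*(1-t)^2*w^3*(1-w)*v^2*(1-v) + 37268*t^5*(1-t)^2*w^3*(1-w)*v^3 + 12717*t^5*(1-t)^2*w^4*(1-v)^3 + 35136*t^5*(1-t)^2*w^4*v*(1-v)^2 + 30542*t^5*(1-t)^2*w^4*v^2*(1-v) + 7816*t^5*(1-t)^2*w^4*v^3 + 10576*t^4*(1-t)^3*(1-w)^4*(1-v)^3 + 31728*t^4*(1-t)^3*(1-w)^4*v*(1-v)^2 + 31728*t^4*(1-t)^3*(1-w)^4*v^2*(1-v) + 10576*t^4*(1-t)^3*(1-w)^4*v^3 + 52280*t^4*(1-t)^3*w*(1-w)^3*(1-v)^3 + 150818*t^4*(1-t)^3*w*(1-w)^3*v*(1-v)^2 + 144796*t^4*(1-t)^3*w*(1-w)^3*v^2*(1-v) + 46258*t^4*(1-t)^3*w*(1-w)^3*v^3 + 92073*t^4*(1-t)^3*w^2*(1-w)^2*(1-v)^3 + 256612*t^4*(1-t)^3*w^2*(1-w)^2*v*(1-v)^2 + 235153*t^4*(1-t)^3*w^2*(1-w)^2*v^2*(1-v) + 70614*t^4*(1-t)^3*w^2*(1-w)^2*v^3 + 67778*t^4*(1-t)^3*w^3*(1-w)*(1-v)^3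 + 183990*t^4*(1-t)^3*w^3*(1-w)*v*(1-v)^2 + 161002*t^4*(1-t)^3*w^3*(1-w)*v^2*(1-v) + 44510*t^4*(1-t)^3*w^3*(1-w)*v^3 + 17562*t^4*(1-t)^3*w^4*(1-v)^3 + 46958*t^4*(1-t)^3*w^4*v*(1-v)^2 + 39429*t^4*(1-t)^3*w^4*v^2*(1-v) + 9738*t^4*(1-t)^3*w^4*v^3 + 6562*t^3*(1-t)^4*(1-w)^4*(1-v)^3 + 19686*t^3*(1-t)^4*(1-w)^4*v*(1-v)^2 + 19686*t^3*(1-t)^4*(1-w)^4*v^2*(1-v) + 6562*t^3*(1-t)^4*(1-w)^4*v^3 + 34136*t^3*(1-t)^4*w*(1-w)^3*(1-v)^3 + 98160*t^3*(1-t)^4*w*(1-w)^3*v*(1-v)^2 + 93912*t^3*(1-t)^4*w*(1-w)^3*v^2*(1-v) + 29888*t^3*(1-t)^4*w*(1-w)^3*v^3 + 63509*t^3*(1-t)^4*w^2*(1-w)^2*(1-v)^3 + 175744*t^3*(1-t)^4*w^2*(1-w)^2*v*(1-v)^2 + 159771*t^3*(1-t)^4*w^2*(1-w)^2*v^2*(1-v) + 47536*t^3*(1-t)^4*w^2*(1-w)^2*v^3 + 49704*t^3*(1-t)^4*w^3*(1-w)*(1-v)^3 + 133232*t^3*(1-t)^4*w^3*(1-w)*v*(1-v)^2 + 114984*t^3*(1-t)^4*w^3*(1-w)*v^2*(1-v) + 31312*t^3*(1-t)^4*w^3*(1-w)*v^3 + 13832*t^3*(1-t)^4*w^4*(1-v)^3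 + 36184*t^3*(1-t)^4*w^4*v*(1-v)^2 + 29687*t^3*(1-t)^4*w^4*v^2*(1-v) + 7182*t^3*(1-t)^4*w^4*v^3 + 2392*t^2*(1-t)^5*(1-w)^4*(1-v)^3 + 7176*t^2*(1-t)^5*(1-w)^4*v*(1-v)^2 + 7176*t^2*(1-t)^5*(1-w)^4*v^2*(1-v) + 2392*t^2*(1-t)^5*(1-w)^4*v^3 + 13072*t^2*(1-t)^5*w*(1-w)^3*(1-v)^3 + 37510*t^2*(1-t)^5*w*(1-w)^3*v*(1-v)^2 + 35804*t^2*(1-t)^5*w*(1-w)^3*v^2*(1-v) + 11366*t^2*(1-t)^5*w*(1-w)^3*v^3 + 25634*t^2*(1-t)^5*w^2*(1-w)^2*(1-v)^3 + 70622*t^2*(1-t)^5*w^2*(1-w)^2*v*(1-v)^2 + 63894*t^2*(1-t)^5*w^2*(1-w)^2*v^2*(1-v) + 18906*t^2*(1-t)^5*w^2*(1-w)^2*v^3 + 21248*t^2*(1-t)^5*w^3*(1-w)*(1-v)^3 + 56536*t^2*(1-t)^5*w^3*(1-w)*v*(1-v)^2 + 48432*t^2*(1-t)^5*w^3*(1-w)*v^2*(1-v) + 13106*t^2*(1-t)^5*w^3*(1-w)*v^3 + 6304*t^2*(1-t)^5*w^4*(1-v)^3 + 16288*t^2*(1-t)^5*w^4*v*(1-v)^2 + 13214*t^2*(1-t)^5*w^4*v^2*(1-v) + 3190*t^2*(1-t)^5*w^4*v^3 + 476*t*(1-t)^6*(1-w)^4*(1-v)^3 + 1428*t*(1-t)^6*(1-w)^4*v*(1-v)^2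 + 1428*t*(1-t)^6*(1-w)^4*v^2*(1-v) + 476*t*(1-t)^6*(1-w)^4*v^3 + 2728*t*(1-t)^6*w*(1-w)^3*(1-v)^3 + 7820*t*(1-t)^6*w*(1-w)^3*v*(1-v)^2 + 7456*t*(1-t)^6*w*(1-w)^3*v^2*(1-v) + 2364*t*(1-t)^6*w*(1-w)^3*v^3 + 5628*t*(1-t)^6*w^2*(1-w)^2*(1-v)^3 + 15480*t*(1-t)^6*w^2*(1-w)^2*v*(1-v)^2 + 13984*t*(1-t)^6*w^2*(1-w)^2*v^2*(1-v) + 4132*t*(1-t)^6*w^2*(1-w)^2*v^3 + 4928*t*(1-t)^6*w^3*(1-w)*(1-v)^3 + 13088*t*(1-t)^6*w^3*(1-w)*v*(1-v)^2 + 11208*t*(1-t)^6*w^3*(1-w)*v^2*(1-v) + 3044*t*(1-t)^6*w^3*(1-w)*v^3 + 1552*t*(1-t)^6*w^4*(1-v)^3 + 4000*t*(1-t)^6*w^4*v*(1-v)^2 + 3252*t*(1-t)^6*w^4*v^2*(1-v) + 800*t*(1-t)^6*w^4*v^3 + 40*(1-t)^7*(1-w)^4*(1-v)^3 + 120*(1-t)^7*(1-w)^4*v*(1-v)^2 + 120*(1-t)^7*(1-w)^4*v^2*(1-v) + 40*(1-t)^7*(1-w)^4*v^3 + 240*(1-t)^7*w*(1-w)^3*(1-v)^3 + 688*(1-t)^7*w*(1-w)^3*v*(1-v)^2 + 656*(1-t)^7*w*(1-w)^3*v^2*(1-v) + 208*(1-t)^7*w*(1-w)^3*v^3 + 520*(1-t)^7*w^2*(1-w)^2*(1-v)^3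 + 1432*(1-t)^7*w^2*(1-w)^2*v*(1-v)^2 + 1296*(1-t)^7*w^2*(1-w)^2*v^2*(1-v) + 384*(1-t)^7*w^2*(1-w)^2*v^3 + 480*(1-t)^7*w^3*(1-w)*(1-v)^3 + 1280*(1-t)^7*w^3*(1-w)*v*(1-v)^2 + 1104*(1-t)^7*w^3*(1-w)*v^2*(1-v) + 304*(1-t)^7*w^3*(1-w)*v^3 + 160*(1-t)^7*w^4*(1-v)^3 + 416*(1-t)^7*w^4*v*(1-v)^2 + 344*(1-t)^7*w^4*v^2*(1-v) + 88*(1-t)^7*w^4*v^3))) by (unfold SH1_m2; field).
  assert (P : 0 < 648*t^7*w^4*(1-v)^3 + (5056*t^6*(1-t)*(1-w)^4*(1-v)^3 + 15168*t^6*(1-t)*(1-w)^4*v*(1-v)^2 + 15168*t^6*(1-t)*(1-w)^4*v^2*(1-v) + 5056*t^6*(1-t)*(1-w)^4*v^3 + 22432*t^6*(1-t)*w*(1-w)^3*(1-v)^3 + 65336*t^6*(1-t)*w*(1-w)^3*v*(1-v)^2 + 63376*t^6*(1-t)*w*(1-w)^3*v^2*(1-v) + 20472*t^6*(1-t)*w*(1-w)^3*v^3 + 35004*t^6*(1-t)*w^2*(1-w)^2*(1-v)^3 + 99752*t^6*(1-t)*w^2*(1-w)^2*v*(1-v)^2 + 93668*t^6*(1-t)*w^2*(1-w)^2*v^2*(1-v) + 28920*t^6*(1-t)*w^2*(1-w)^2*v^3 + 22248*t^6*(1-t)*w^3*(1-w)*(1-v)^3 + 63006*t^6*(1-t)*w^3*(1-w)*v*(1-v)^2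 + 57704*t^6*(1-t)*w^3*(1-w)*v^2*(1-v) + 16784*t^6*(1-t)*w^3*(1-w)*v^3 + 4725*t^6*(1-t)*w^4*(1-v)^3 + 13716*t^6*(1-t)*w^4*v*(1-v)^2 + 12516*t^6*(1-t)*w^4*v^2*(1-v) + 3360*t^6*(1-t)*w^4*v^3 + 1056*t^7*(1-w)^4*(1-v)^3 + 3168*t^7*(1-w)^4*v*(1-v)^2 + 3168*t^7*(1-w)^4*v^2*(1-v) + 1056*t^7*(1-w)^4*v^3 + 4416*t^7*w*(1-w)^3*(1-v)^3 + 12944*t^7*w*(1-w)^3*v*(1-v)^2 + 12640*t^7*w*(1-w)^3*v^2*(1-v) + 4112*t^7*w*(1-w)^3*v^3 + 6408*t^7*w^2*(1-w)^2*(1-v)^3 + 18552*t^7*w^2*(1-w)^2*v*(1-v)^2 + 17712*t^7*w^2*(1-w)^2*v^2*(1-v) + 5568*t^7*w^2*(1-w)^2*v^3 + 3672*t^7*w^3*(1-w)*(1-v)^3 + 10764*t^7*w^3*(1-w)*v*(1-v)^2 + 10200*t^7*w^3*(1-w)*v^2*(1-v) + 3072*t^7*w^3*(1-w)*v^3 + 2052*t^7*w^4*v*(1-v)^2 + 2016*t^7*w^4*v^2*(1-v) + 576*t^7*w^4*v^3 + 9968*t^5*(1-t)^2*(1-w)^4*(1-v)^3 + 29904*t^5*(1-t)^2*(1-w)^4*v*(1-v)^2 + 29904*t^5*(1-t)^2*(1-w)^4*v^2*(1-v) + 9968*t^5*(1-t)^2*(1-w)^4*v^3 + 46736*t^5*(1-t)^2*w*(1-w)^3*(1-v)^3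 + 135404*t^5*(1-t)^2*w*(1-w)^3*v*(1-v)^2 + 130600*t^5*(1-t)^2*w*(1-w)^3*v^2*(1-v) + 41932*t^5*(1-t)^2*w*(1-w)^3*v^3 + 77674*t^5*(1-t)^2*w^2*(1-w)^2*(1-v)^3 + 218606*t^5*(1-t)^2*w^2*(1-w)^2*v*(1-v)^2 + 202508*t^5*(1-t)^2*w^2*(1-w)^2*v^2*(1-v) + 61576*t^5*(1-t)^2*w^2*(1-w)^2*v^3 + 53442*t^5*(1-t)^2*w^3*(1-w)*(1-v)^3 + 147704*t^5*(1-t)^2*w^3*(1-w)*v*(1-v)^2 + 131826*t^5*(1-t)^2*w^3*(1-w)*v^2*(1-v) + 37268*t^5*(1-t)^2*w^3*(1-w)*v^3 + 12717*t^5*(1-t)^2*w^4*(1-v)^3 + 35136*t^5*(1-t)^2*w^4*v*(1-v)^2 + 30542*t^5*(1-t)^2*w^4*v^2*(1-v) + 7816*t^5*(1-t)^2*w^4*v^3 + 10576*t^4*(1-t)^3*(1-w)^4*(1-v)^3 + 31728*t^4*(1-t)^3*(1-w)^4*v*(1-v)^2 + 31728*t^4*(1-t)^3*(1-w)^4*v^2*(1-v) + 10576*t^4*(1-t)^3*(1-w)^4*v^3 + 52280*t^4*(1-t)^3*w*(1-w)^3*(1-v)^3 + 150818*t^4*(1-t)^3*w*(1-w)^3*v*(1-v)^2 + 144796*t^4*(1-t)^3*w*(1-w)^3*v^2*(1-v) + 46258*t^4*(1-t)^3*w*(1-w)^3*v^3 + 92073*t^4*(1-t)^3*w^2*(1-w)^2*(1-v)^3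 + 256612*t^4*(1-t)^3*w^2*(1-w)^2*v*(1-v)^2 + 235153*t^4*(1-t)^3*w^2*(1-w)^2*v^2*(1-v) + 70614*t^4*(1-t)^3*w^2*(1-w)^2*v^3 + 67778*t^4*(1-t)^3*w^3*(1-w)*(1-v)^3 + 183990*t^4*(1-t)^3*w^3*(1-w)*v*(1-v)^2 + 161002*t^4*(1-t)^3*w^3*(1-w)*v^2*(1-v) + 44510*t^4*(1-t)^3*w^3*(1-w)*v^3 + 17562*t^4*(1-t)^3*w^4*(1-v)^3 + 46958*t^4*(1-t)^3*w^4*v*(1-v)^2 + 39429*t^4*(1-t)^3*w^4*v^2*(1-v) + 9738*t^4*(1-t)^3*w^4*v^3 + 6562*t^3*(1-t)^4*(1-w)^4*(1-v)^3 + 19686*t^3*(1-t)^4*(1-w)^4*v*(1-v)^2 + 19686*t^3*(1-t)^4*(1-w)^4*v^2*(1-v) + 6562*t^3*(1-t)^4*(1-w)^4*v^3 + 34136*t^3*(1-t)^4*w*(1-w)^3*(1-v)^3 + 98160*t^3*(1-t)^4*w*(1-w)^3*v*(1-v)^2 + 93912*t^3*(1-t)^4*w*(1-w)^3*v^2*(1-v) + 29888*t^3*(1-t)^4*w*(1-w)^3*v^3 + 63509*t^3*(1-t)^4*w^2*(1-w)^2*(1-v)^3 + 175744*t^3*(1-t)^4*w^2*(1-w)^2*v*(1-v)^2 + 159771*t^3*(1-t)^4*w^2*(1-w)^2*v^2*(1-v) + 47536*t^3*(1-t)^4*w^2*(1-w)^2*v^3 + 49704*t^3*(1-t)^4*w^3*(1-w)*(1-v)^3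 + 133232*t^3*(1-t)^4*w^3*(1-w)*v*(1-v)^2 + 114984*t^3*(1-t)^4*w^3*(1-w)*v^2*(1-v) + 31312*t^3*(1-t)^4*w^3*(1-w)*v^3 + 13832*t^3*(1-t)^4*w^4*(1-v)^3 + 36184*t^3*(1-t)^4*w^4*v*(1-v)^2 + 29687*t^3*(1-t)^4*w^4*v^2*(1-v) + 7182*t^3*(1-t)^4*w^4*v^3 + 2392*t^2*(1-t)^5*(1-w)^4*(1-v)^3 + 7176*t^2*(1-t)^5*(1-w)^4*v*(1-v)^2 + 7176*t^2*(1-t)^5*(1-w)^4*v^2*(1-v) + 2392*t^2*(1-t)^5*(1-w)^4*v^3 + 13072*t^2*(1-t)^5*w*(1-w)^3*(1-v)^3 + 37510*t^2*(1-t)^5*w*(1-w)^3*v*(1-v)^2 + 35804*t^2*(1-t)^5*w*(1-w)^3*v^2*(1-v) + 11366*t^2*(1-t)^5*w*(1-w)^3*v^3 + 25634*t^2*(1-t)^5*w^2*(1-w)^2*(1-v)^3 + 70622*t^2*(1-t)^5*w^2*(1-w)^2*v*(1-v)^2 + 63894*t^2*(1-t)^5*w^2*(1-w)^2*v^2*(1-v) + 18906*t^2*(1-t)^5*w^2*(1-w)^2*v^3 + 21248*t^2*(1-t)^5*w^3*(1-w)*(1-v)^3 + 56536*t^2*(1-t)^5*w^3*(1-w)*v*(1-v)^2 + 48432*t^2*(1-t)^5*w^3*(1-w)*v^2*(1-v) + 13106*t^2*(1-t)^5*w^3*(1-w)*v^3 + 6304*t^2*(1-t)^5*w^4*(1-v)^3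 + 16288*t^2*(1-t)^5*w^4*v*(1-v)^2 + 13214*t^2*(1-t)^5*w^4*v^2*(1-v) + 3190*t^2*(1-t)^5*w^4*v^3 + 476*t*(1-t)^6*(1-w)^4*(1-v)^3 + 1428*t*(1-t)^6*(1-w)^4*v*(1-v)^2 + 1428*t*(1-t)^6*(1-w)^4*v^2*(1-v) + 476*t*(1-t)^6*(1-w)^4*v^3 + 2728*t*(1-t)^6*w*(1-w)^3*(1-v)^3 + 7820*t*(1-t)^6*w*(1-w)^3*v*(1-v)^2 + 7456*t*(1-t)^6*w*(1-w)^3*v^2*(1-v) + 2364*t*(1-t)^6*w*(1-w)^3*v^3 + 5628*t*(1-t)^6*w^2*(1-w)^2*(1-v)^3 + 15480*t*(1-t)^6*w^2*(1-w)^2*v*(1-v)^2 + 13984*t*(1-t)^6*w^2*(1-w)^2*v^2*(1-v) + 4132*t*(1-t)^6*w^2*(1-w)^2*v^3 + 4928*t*(1-t)^6*w^3*(1-w)*(1-v)^3 + 13088*t*(1-t)^6*w^3*(1-w)*v*(1-v)^2 + 11208*t*(1-t)^6*w^3*(1-w)*v^2*(1-v) + 3044*t*(1-t)^6*w^3*(1-w)*v^3 + 1552*t*(1-t)^6*w^4*(1-v)^3 + 4000*t*(1-t)^6*w^4*v*(1-v)^2 + 3252*t*(1-t)^6*w^4*v^2*(1-v) + 800*t*(1-t)^6*w^4*v^3 + 40*(1-t)^7*(1-w)^4*(1-v)^3 + 120*(1-t)^7*(1-w)^4*v*(1-v)^2 + 120*(1-t)^7*(1-w)^4*v^2*(1-v)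 + 40*(1-t)^7*(1-w)^4*v^3 + 240*(1-t)^7*w*(1-w)^3*(1-v)^3 + 688*(1-t)^7*w*(1-w)^3*v*(1-v)^2 + 656*(1-t)^7*w*(1-w)^3*v^2*(1-v) + 208*(1-t)^7*w*(1-w)^3*v^3 + 520*(1-t)^7*w^2*(1-w)^2*(1-v)^3 + 1432*(1-t)^7*w^2*(1-w)^2*v*(1-v)^2 + 1296*(1-t)^7*w^2*(1-w)^2*v^2*(1-v) + 384*(1-t)^7*w^2*(1-w)^2*v^3 + 480*(1-t)^7*w^3*(1-w)*(1-v)^3 + 1280*(1-t)^7*w^3*(1-w)*v*(1-v)^2 + 1104*(1-t)^7*w^3*(1-w)*v^2*(1-v) + 304*(1-t)^7*w^3*(1-w)*v^3 + 160*(1-t)^7*w^4*(1-v)^3 + 416*(1-t)^7*w^4*v*(1-v)^2 + 344*(1-t)^7*w^4*v^2*(1-v) + 88*(1-t)^7*w^4*v^3)) by (apply Rplus_lt_le_0_compat; [strict_tac | nonneg_tac]).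
  lra.
Qed.

Definition SGC_m2 (t w : R) : R :=
  - 24 - 72*w - 72*w^2 - 24*w^3 - 152*t - 368*t*w - 264*t*w^2 - 32*t*w^3 + 16*t*w^4 - 400*t^2 - 724*t^2*w - 278*t^2*w^2 + 86*t^2*w^3 + 38*t^2*w^4 - 2*t^2*w^5 - 560*t^3 - 656*t^3*w + 24*t^3*w^2 + 154*t^3*w^3 + 4*t^3*w^4 - 6*t^3*w^5 - 440*t^4 - 224*t^4*w + 180*t^4*w^2 + 42*t^4*w^3 - 18*t^4*w^4 - 184*t^5 + 32*t^5*w + 64*t^5*w^2 - 18*t^5*w^3 - 32*t^6 + 28*t^6*w - 6*t^6*w^2.
Lemma SGC_m2_sign (t w : R) (Ht0: 0 < t) (Ht1: t <= 1) (Hw0: 0 < w) (Hw1: w <= 1) : SGC_m2 t w < 0.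
Proof.
  assert (E : 1 * SGC_m2 t w = - (3888*t^6*w^5 + (1792*t^6*(1-w)^5 + 10944*t^6*w*(1-w)^4 + 26208*t^6*w^2*(1-w)^3 + 30672*t^6*w^3*(1-w)^2 + 17496*t^6*w^4*(1-w) + 5248*t^5*(1-t)*(1-w)^5 + 33792*t^5*(1-t)*w*(1-w)^4 + 85056*t^5*(1-t)*w^2*(1-w)^3 + 104328*t^5*(1-t)*w^3*(1-w)^2 + 62208*t^5*(1-t)*w^4*(1-w) + 14418*t^5*(1-t)*w^5 + 6400*t^4*(1-t)^2*(1-w)^5 + 43296*t^4*(1-t)^2*w*(1-w)^4 + 114320*t^4*(1-t)^2*w^2*(1-w)^3 + 146844*t^4*(1-t)^2*w^3*(1-w)^2 + 91530*t^4*(1-t)^2*w^4*(1-w) + 22140*t^4*(1-t)^2*w^5 + 4160*t^3*(1-t)^3*(1-w)^5 + 29472*t^3*(1-t)^3*w*(1-w)^4 + 81456*t^3*(1-t)^3*w^2*(1-w)^3 + 109438*t^3*(1-t)^3*w^3*(1-w)^2 + 71280*t^3*(1-t)^3*w^4*(1-w) + 18000*t^3*(1-t)^3*w^5 + 1520*t^2*(1-t)^4*(1-w)^5 + 11244*t^2*(1-t)^4*w*(1-w)^4 + 32454*t^2*(1-t)^4*w^2*(1-w)^3 + 45532*t^2*(1-t)^4*w^3*(1-w)^2 + 30960*t^2*(1-t)^4*w^4*(1-w) + 8160*t^2*(1-t)^4*w^5 + 296*t*(1-t)^5*(1-w)^5 + 2280*t*(1-t)^5*w*(1-w)^4 + 6856*t*(1-t)^5*w^2*(1-w)^3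 + 10024*t*(1-t)^5*w^3*(1-w)^2 + 7104*t*(1-t)^5*w^4*(1-w) + 1952*t*(1-t)^5*w^5 + 24*(1-t)^6*(1-w)^5 + 192*(1-t)^6*w*(1-w)^4 + 600*(1-t)^6*w^2*(1-w)^3 + 912*(1-t)^6*w^3*(1-w)^2 + 672*(1-t)^6*w^4*(1-w) + 192*(1-t)^6*w^5))) by (unfold SGC_m2; field).
  assert (P : 0 < 3888*t^6*w^5 + (1792*t^6*(1-w)^5 + 10944*t^6*w*(1-w)^4 + 26208*t^6*w^2*(1-w)^3 + 30672*t^6*w^3*(1-w)^2 + 17496*t^6*w^4*(1-w) + 5248*t^5*(1-t)*(1-w)^5 + 33792*t^5*(1-t)*w*(1-w)^4 + 85056*t^5*(1-t)*w^2*(1-w)^3 + 104328*t^5*(1-t)*w^3*(1-w)^2 + 62208*t^5*(1-t)*w^4*(1-w) + 14418*t^5*(1-t)*w^5 + 6400*t^4*(1-t)^2*(1-w)^5 + 43296*t^4*(1-t)^2*w*(1-w)^4 + 114320*t^4*(1-t)^2*w^2*(1-w)^3 + 146844*t^4*(1-t)^2*w^3*(1-w)^2 + 91530*t^4*(1-t)^2*w^4*(1-w) + 22140*t^4*(1-t)^2*w^5 + 4160*t^3*(1-t)^3*(1-w)^5 + 29472*t^3*(1-t)^3*w*(1-w)^4 + 81456*t^3*(1-t)^3*w^2*(1-w)^3 + 109438*t^3*(1-t)^3*w^3*(1-w)^2 + 71280*t^3*(1-t)^3*w^4*(1-w) + 18000*t^3*(1-t)^3*w^5 + 1520*t^2*(1-t)^4*(1-w)^5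 + 11244*t^2*(1-t)^4*w*(1-w)^4 + 32454*t^2*(1-t)^4*w^2*(1-w)^3 + 45532*t^2*(1-t)^4*w^3*(1-w)^2 + 30960*t^2*(1-t)^4*w^4*(1-w) + 8160*t^2*(1-t)^4*w^5 + 296*t*(1-t)^5*(1-w)^5 + 2280*t*(1-t)^5*w*(1-w)^4 + 6856*t*(1-t)^5*w^2*(1-w)^3 + 10024*t*(1-t)^5*w^3*(1-w)^2 + 7104*t*(1-t)^5*w^4*(1-w) + 1952*t*(1-t)^5*w^5 + 24*(1-t)^6*(1-w)^5 + 192*(1-t)^6*w*(1-w)^4 + 600*(1-t)^6*w^2*(1-w)^3 + 912*(1-t)^6*w^3*(1-w)^2 + 672*(1-t)^6*w^4*(1-w) + 192*(1-t)^6*w^5)) by (apply Rplus_lt_le_0_compat; [strict_tac | nonneg_tac]).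
  lra.
Qed.

Definition SFV_m2 (t w : R) : R :=
  - 8 - 36*w - 60*w^2 - 44*w^3 - 12*w^4 - 44*t - 166*t*w - 220*t*w^2 - 116*t*w^3 - 16*t*w^4 + 2*t*w^5 - 102*t^2 - 316*t^2*w - 323*t^2*w^2 - 117*t^2*w^3 - 7*t^2*w^4 + 1*t^2*w^5 - 130*t^3 - 324*t^3*w - 248*t^3*w^2 - 59*t^3*w^3 + 1*t^3*w^5 - 100*t^4 - 196*t^4*w - 106*t^4*w^2 - 11*t^4*w^3 + 3*t^4*w^4 - 48*t^5 - 70*t^5*w - 20*t^5*w^2 + 3*t^5*w^3 - 14*t^6 - 12*t^6*w + 1*t^6*w^2 - 2*t^7.
Lemma SFV_m2_sign (t w : R) (Ht0: 0 < t) (Ht1: t <= 1) (Hw0: 0 < w) (Hw1: w <= 1) : SFV_m2 t w < 0.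
Proof.
  assert (E : 1 * SFV_m2 t w = - (2916*t^7*w^5 + (2976*t^5*(1-t)^2*(1-w)^5 + 23888*t^5*(1-t)^2*w*(1-w)^4 + 75408*t^5*(1-t)^2*w^2*(1-w)^3 + 116874*t^5*(1-t)^2*w^3*(1-w)^2 + 88749*t^5*(1-t)^2*w^4*(1-w) + 26325*t^5*(1-t)^2*w^5 + 1760*t^6*(1-t)*(1-w)^5 + 13664*t^6*(1-t)*w*(1-w)^4 + 41760*t^6*(1-t)*w^2*(1-w)^3 + 62748*t^6*(1-t)*w^3*(1-w)^2 + 46278*t^6*(1-t)*w^4*(1-w) + 13365*t^6*(1-t)*w^5 + 448*t^7*(1-w)^5 + 3360*t^7*w*(1-w)^4 + 9936*t^7*w^2*(1-w)^3 + 14472*t^7*w^3*(1-w)^2 + 10368*t^7*w^4*(1-w) + 2800*t^4*(1-t)^3*(1-w)^5 + 23232*t^4*(1-t)^3*w*(1-w)^4 + 75756*t^4*(1-t)^3*w^2*(1-w)^3 + 121153*t^4*(1-t)^3*w^3*(1-w)^2 + 94773*t^4*(1-t)^3*w^4*(1-w) + 28890*t^4*(1-t)^3*w^5 + 1580*t^3*(1-t)^4*(1-w)^5 + 13554*t^3*(1-t)^4*w*(1-w)^4 + 45679*t^3*(1-t)^4*w^2*(1-w)^3 + 75437*t^3*(1-t)^4*w^3*(1-w)^2 + 60848*t^3*(1-t)^4*w^4*(1-w) + 19080*t^3*(1-t)^4*w^5 + 534*t^2*(1-t)^5*(1-w)^5 + 4738*t^2*(1-t)^5*w*(1-w)^4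 + 16515*t^2*(1-t)^5*w^2*(1-w)^3 + 28194*t^2*(1-t)^5*w^3*(1-w)^2 + 23480*t^2*(1-t)^5*w^4*(1-w) + 7584*t^2*(1-t)^5*w^5 + 100*t*(1-t)^6*(1-w)^5 + 918*t*(1-t)^6*w*(1-w)^4 + 3312*t*(1-t)^6*w^2*(1-w)^3 + 5852*t*(1-t)^6*w^3*(1-w)^2 + 5040*t*(1-t)^6*w^4*(1-w) + 1680*t*(1-t)^6*w^5 + 8*(1-t)^7*(1-w)^5 + 76*(1-t)^7*w*(1-w)^4 + 284*(1-t)^7*w^2*(1-w)^3 + 520*(1-t)^7*w^3*(1-w)^2 + 464*(1-t)^7*w^4*(1-w) + 160*(1-t)^7*w^5))) by (unfold SFV_m2; field).
  assert (P : 0 < 2916*t^7*w^5 + (2976*t^5*(1-t)^2*(1-w)^5 + 23888*t^5*(1-t)^2*w*(1-w)^4 + 75408*t^5*(1-t)^2*w^2*(1-w)^3 + 116874*t^5*(1-t)^2*w^3*(1-w)^2 + 88749*t^5*(1-t)^2*w^4*(1-w) + 26325*t^5*(1-t)^2*w^5 + 1760*t^6*(1-t)*(1-w)^5 + 13664*t^6*(1-t)*w*(1-w)^4 + 41760*t^6*(1-t)*w^2*(1-w)^3 + 62748*t^6*(1-t)*w^3*(1-w)^2 + 46278*t^6*(1-t)*w^4*(1-w) + 13365*t^6*(1-t)*w^5 + 448*t^7*(1-w)^5 + 3360*t^7*w*(1-w)^4 + 9936*t^7*w^2*(1-w)^3 + 14472*t^7*w^3*(1-w)^2 + 10368*t^7*w^4*(1-w)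 + 2800*t^4*(1-t)^3*(1-w)^5 + 23232*t^4*(1-t)^3*w*(1-w)^4 + 75756*t^4*(1-t)^3*w^2*(1-w)^3 + 121153*t^4*(1-t)^3*w^3*(1-w)^2 + 94773*t^4*(1-t)^3*w^4*(1-w) + 28890*t^4*(1-t)^3*w^5 + 1580*t^3*(1-t)^4*(1-w)^5 + 13554*t^3*(1-t)^4*w*(1-w)^4 + 45679*t^3*(1-t)^4*w^2*(1-w)^3 + 75437*t^3*(1-t)^4*w^3*(1-w)^2 + 60848*t^3*(1-t)^4*w^4*(1-w) + 19080*t^3*(1-t)^4*w^5 + 534*t^2*(1-t)^5*(1-w)^5 + 4738*t^2*(1-t)^5*w*(1-w)^4 + 16515*t^2*(1-t)^5*w^2*(1-w)^3 + 28194*t^2*(1-t)^5*w^3*(1-w)^2 + 23480*t^2*(1-t)^5*w^4*(1-w) + 7584*t^2*(1-t)^5*w^5 + 100*t*(1-t)^6*(1-w)^5 + 918*t*(1-t)^6*w*(1-w)^4 + 3312*t*(1-t)^6*w^2*(1-w)^3 + 5852*t*(1-t)^6*w^3*(1-w)^2 + 5040*t*(1-t)^6*w^4*(1-w) + 1680*t*(1-t)^6*w^5 + 8*(1-t)^7*(1-w)^5 + 76*(1-t)^7*w*(1-w)^4 + 284*(1-t)^7*w^2*(1-w)^3 + 520*(1-t)^7*w^3*(1-w)^2 + 464*(1-t)^7*w^4*(1-w) + 160*(1-t)^7*w^5)) by (apply Rplus_lt_le_0_compat; [strict_tac | nonneg_tac]).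
  lra.
Qed.

Definition SQ_m2 (t w : R) : R :=
  40 + 120*w + 120*w^2 + 40*w^3 + 236*t + 540*t*w + 324*t*w^2 - 28*t*w^3 - 48*t*w^4 + 572*t^2 + 880*t^2*w + 70*t^2*w^2 - 322*t^2*w^3 - 74*t^2*w^4 + 10*t^2*w^5 + 718*t^3 + 510*t^3*w - 539*t^3*w^2 - 375*t^3*w^3 + 9*t^3*w^4 + 13*t^3*w^5 + 470*t^4 - 160*t^4*w - 596*t^4*w^2 - 93*t^4*w^3 + 38*t^4*w^4 + 1*t^4*w^5 + 120*t^5 - 320*t^5*w - 194*t^5*w^2 + 31*t^5*w^3 + 3*t^5*w^4 - 24*t^6 - 120*t^6*w - 2*t^6*w^2 + 3*t^6*w^3 - 18*t^7 - 10*t^7*w + 1*t^7*w^2 - 2*t^8.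
Lemma SQ_m2_sign (t w : R) (Ht0: 0 < t) (Ht1: t <= 1) (Hw0: 0 < w) (Hw1: w <= 1) : SQ_m2 t w > 0.
Proof.
  assert (E : 1 * SQ_m2 t w = 1944*t^8*w^5 + (24992*t^6*(1-t)^2*(1-w)^5 + 155920*t^6*(1-t)^2*w*(1-w)^4 + 375424*t^6*(1-t)^2*w^2*(1-w)^3 + 432162*t^6*(1-t)^2*w^3*(1-w)^2 + 234981*t^6*(1-t)^2*w^4*(1-w) + 47601*t^6*(1-t)^2*w^5 + 11168*t^7*(1-t)*(1-w)^5 + 66560*t^7*(1-t)*w*(1-w)^4 + 152544*t^7*(1-t)*w^2*(1-w)^3 + 165996*t^7*(1-t)*w^3*(1-w)^2 + 84186*t^7*(1-t)*w^4*(1-w) + 15471*t^7*(1-t)*w^5 + 2112*t^8*(1-w)^5 + 12000*t^8*w*(1-w)^4 + 26064*t^8*w^2*(1-w)^3 + 26568*t^8*w^3*(1-w)^2 + 12312*t^8*w^4*(1-w) + 31120*t^5*(1-t)^3*(1-w)^5 + 202960*t^5*(1-t)^3*w*(1-w)^4 + 512132*t^5*(1-t)^3*w^2*(1-w)^3 + 620565*t^5*(1-t)^3*w^3*(1-w)^2 + 358059*t^5*(1-t)^3*w^4*(1-w) + 78120*t^5*(1-t)^3*w^5 + 23700*t^4*(1-t)^4*(1-w)^5 + 161390*t^4*(1-t)^4*w*(1-w)^4 + 426059*t^4*(1-t)^4*w^2*(1-w)^3 + 541859*t^4*(1-t)^4*w^3*(1-w)^2 + 329894*t^4*(1-t)^4*w^4*(1-w)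 + 76620*t^4*(1-t)^4*w^5 + 11346*t^3*(1-t)^5*(1-w)^5 + 80580*t^3*(1-t)^5*w*(1-w)^4 + 222265*t^3*(1-t)^5*w^2*(1-w)^3 + 296120*t^3*(1-t)^5*w^3*(1-w)^2 + 189592*t^3*(1-t)^5*w^4*(1-w) + 46576*t^3*(1-t)^5*w^5 + 3344*t^2*(1-t)^6*(1-w)^5 + 24740*t^2*(1-t)^6*w*(1-w)^4 + 71218*t^2*(1-t)^6*w^2*(1-w)^3 + 99256*t^2*(1-t)^6*w^3*(1-w)^2 + 66688*t^2*(1-t)^6*w^4*(1-w) + 17264*t^2*(1-t)^6*w^5 + 556*t*(1-t)^7*(1-w)^5 + 4280*t*(1-t)^7*w*(1-w)^4 + 12844*t*(1-t)^7*w^2*(1-w)^3 + 18704*t*(1-t)^7*w^3*(1-w)^2 + 13168*t*(1-t)^7*w^4*(1-w) + 3584*t*(1-t)^7*w^5 + 40*(1-t)^8*(1-w)^5 + 320*(1-t)^8*w*(1-w)^4 + 1000*(1-t)^8*w^2*(1-w)^3 + 1520*(1-t)^8*w^3*(1-w)^2 + 1120*(1-t)^8*w^4*(1-w) + 320*(1-t)^8*w^5)) by (unfold SQ_m2; field).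
  assert (P : 0 < 1944*t^8*w^5 + (24992*t^6*(1-t)^2*(1-w)^5 + 155920*t^6*(1-t)^2*w*(1-w)^4 + 375424*t^6*(1-t)^2*w^2*(1-w)^3 + 432162*t^6*(1-t)^2*w^3*(1-w)^2 + 234981*t^6*(1-t)^2*w^4*(1-w) + 47601*t^6*(1-t)^2*w^5 + 11168*t^7*(1-t)*(1-w)^5 + 66560*t^7*(1-t)*w*(1-w)^4 + 152544*t^7*(1-t)*w^2*(1-w)^3 + 165996*t^7*(1-t)*w^3*(1-w)^2 + 84186*t^7*(1-t)*w^4*(1-w) + 15471*t^7*(1-t)*w^5 + 2112*t^8*(1-w)^5 + 12000*t^8*w*(1-w)^4 + 26064*t^8*w^2*(1-w)^3 + 26568*t^8*w^3*(1-w)^2 + 12312*t^8*w^4*(1-w) + 31120*t^5*(1-t)^3*(1-w)^5 + 202960*t^5*(1-t)^3*w*(1-w)^4 + 512132*t^5*(1-t)^3*w^2*(1-w)^3 + 620565*t^5*(1-t)^3*w^3*(1-w)^2 + 358059*t^5*(1-t)^3*w^4*(1-w) + 78120*t^5*(1-t)^3*w^5 + 23700*t^4*(1-t)^4*(1-w)^5 + 161390*t^4*(1-t)^4*w*(1-w)^4 + 426059*t^4*(1-t)^4*w^2*(1-w)^3 + 541859*t^4*(1-t)^4*w^3*(1-w)^2 + 329894*t^4*(1-t)^4*w^4*(1-w) + 76620*t^4*(1-t)^4*w^5 + 11346*t^3*(1-t)^5*(1-w)^5 + 80580*t^3*(1-t)^5*w*(1-w)^4 + 222265*t^3*(1-t)^5*w^2*(1-w)^3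 + 296120*t^3*(1-t)^5*w^3*(1-w)^2 + 189592*t^3*(1-t)^5*w^4*(1-w) + 46576*t^3*(1-t)^5*w^5 + 3344*t^2*(1-t)^6*(1-w)^5 + 24740*t^2*(1-t)^6*w*(1-w)^4 + 71218*t^2*(1-t)^6*w^2*(1-w)^3 + 99256*t^2*(1-t)^6*w^3*(1-w)^2 + 66688*t^2*(1-t)^6*w^4*(1-w) + 17264*t^2*(1-t)^6*w^5 + 556*t*(1-t)^7*(1-w)^5 + 4280*t*(1-t)^7*w*(1-w)^4 + 12844*t*(1-t)^7*w^2*(1-w)^3 + 18704*t*(1-t)^7*w^3*(1-w)^2 + 13168*t*(1-t)^7*w^4*(1-w) + 3584*t*(1-t)^7*w^5 + 40*(1-t)^8*(1-w)^5 + 320*(1-t)^8*w*(1-w)^4 + 1000*(1-t)^8*w^2*(1-w)^3 + 1520*(1-t)^8*w^3*(1-w)^2 + 1120*(1-t)^8*w^4*(1-w) + 320*(1-t)^8*w^5)) by (apply Rplus_lt_le_0_compat; [strict_tac | nonneg_tac]).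
  lra.
Qed.


Lemma neg_frac a b : a < 0 -> 0 < b -> a / b < 0.
Proof. intros. unfold Rdiv. assert (0 < / b) by (apply Rinv_0_lt_compat; lra). nra. Qed.
Lemma pos_frac a b : 0 < a -> 0 < b -> 0 < a / b.
Proof. intros. apply Rdiv_lt_0_compat; lra. Qed.

Definition GVf m g z V C := C^2*(INR m+1) - ((1+V)*(lam m g z + V) + V*(lam m g z + V) + V*(1+V)).
Definition GCf m z V C := 2*C*((INR m+1)*V + 2*INR m*z).
Definition FCf m g z V C := 3*C^2*(1+INR m*z/(1+V)) - a1c m g*(1+V)^2 + a2c m g z*(1+V) - a3c m g z.
Definition FVf m g z V C := C*(C^2*(-(INR m*z)/(1+V)^2) - 2*a1c m g*(1+V) + a2c m g z).

Section Conn.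
Variables (t w v g p u z : R).
Hypotheses (Hg : g = 1 + t) (Hp : p = -1 + t*(t+1+w)/((t+1)*(t+2)))
  (Hz : z = - p*(1+p)/(2+(2-g)*p)) (Ht0 : 0 < t) (Ht1 : t <= 1) (Hw0 : 0 < w) (Hw1 : w <= 1).

Lemma sideD : 0 < 2 * ((t + 1) * (t + 2)) + (2 - (1 + t)) * (-1 * ((t + 1) * (t + 2)) + t * (t + 1 + w)).
Proof. nra. Qed.

Ltac fin := repeat split; apply Rgt_not_eq; pose proof sideD; nra.

Lemma conn_G1 : u = v*t*w/((t+1)*(t+2)) ->
  Gf 1 g z (p-u) (1+p+u) = u*t*SG1_m1 t w v/((2+(2-g)*p)*((t+1)*(t+2))^3).
Proof.
  intros Hu. unfold Gf, lam. change (INR 1) with 1. rewrite Hz, Hu, Hg, Hp.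
  unfold SG1_m1. field. fin.
Qed.
Lemma conn_G2 : u = v*t*w/((t+1)*(t+2)) ->
  Gf 2 g z (p-u) (1+p+u) = u*t*SG1_m2 t w v/((2+(2-g)*p)*((t+1)*(t+2))^3).
Proof.
  intros Hu. unfold Gf, lam. replace (INR 2) with 2 by (simpl; lra). rewrite Hz, Hu, Hg, Hp.
  unfold SG1_m2. field. fin.
Qed.
Lemma conn_H1 : u = v*t*w/((t+1)*(t+2)) -> 0 < v -> v < 1 ->
  Ff 1 g z (p-u) (1+p+u) + Gf 1 g z (p-u) (1+p+u) = u*t^2*SH1_m1 t w v/((1+(p-u))*(2+(2-g)*p)*((t+1)*(t+2))^4).
Proof.
  intros Hu Hv0 Hv1. unfold Ff, Gf, lam, a1c, a2c, a3c. change (INR 1) with 1. rewrite Hz, Hu, Hg, Hp.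
  unfold SH1_m1. assert (0 < t*(w*(1-v))) by (apply Rmult_lt_0_compat; [lra| apply Rmult_lt_0_compat; lra]). field. fin.
Qed.
Lemma conn_H2 : u = v*t*w/((t+1)*(t+2)) -> 0 < v -> v < 1 ->
  Ff 2 g z (p-u) (1+p+u) + Gf 2 g z (p-u) (1+p+u) = u*t^2*SH1_m2 t w v/((1+(p-u))*(2+(2-g)*p)*((t+1)*(t+2))^4).
Proof.
  intros Hu Hv0 Hv1. unfold Ff, Gf, lam, a1c, a2c, a3c. replace (INR 2) with 2 by (simpl; lra). rewrite Hz, Hu, Hg, Hp.
  unfold SH1_m2. assert (0 < t*(w*(1-v))) by (apply Rmult_lt_0_compat; [lra| apply Rmult_lt_0_compat; lra]). field. fin.
Qed.
Lemma conn_GC1 : GCf 1 z p (1+p) = t^3*SGC_m1 t w/((2+(2-g)*p)*(1+p)^2*((t+1)*(t+2))^5).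
Proof. unfold GCf. change (INR 1) with 1. rewrite Hz, Hg, Hp. unfold SGC_m1. field. fin. Qed.
Lemma conn_FV1 : FVf 1 g z p (1+p) = t^4*SFV_m1 t w/((2+(2-g)*p)*(1+p)^2*((t+1)*(t+2))^5).
Proof. unfold FVf, a1c, a2c. change (INR 1) with 1. rewrite Hz, Hg, Hp. unfold SFV_m1. field. fin. Qed.
Lemma conn_Q1 : FVf 1 g z p (1+p) + GVf 1 g z p (1+p) - FCf 1 g z p (1+p) - GCf 1 z p (1+p)
   = t^3*SQ_m1 t w/((2+(2-g)*p)*(1+p)^2*((t+1)*(t+2))^5).
Proof. unfold FVf, GVf, FCf, GCf, lam, a1c, a2c, a3c. change (INR 1) with 1. rewrite Hz, Hg, Hp. unfold SQ_m1. field. fin. Qed.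
Lemma conn_GC2 : GCf 2 z p (1+p) = t^3*SGC_m2 t w/((2+(2-g)*p)*(1+p)^2*((t+1)*(t+2))^5).
Proof. unfold GCf. replace (INR 2) with 2 by (simpl; lra). rewrite Hz, Hg, Hp. unfold SGC_m2. field. fin. Qed.
Lemma conn_FV2 : FVf 2 g z p (1+p) = t^4*SFV_m2 t w/((2+(2-g)*p)*(1+p)^2*((t+1)*(t+2))^5).
Proof. unfold FVf, a1c, a2c. replace (INR 2) with 2 by (simpl; lra). rewrite Hz, Hg, Hp. unfold SFV_m2. field. fin. Qed.
Lemma conn_Q2 : FVf 2 g z p (1+p) + GVf 2 g z p (1+p) - FCf 2 g z p (1+p) - GCf 2 z p (1+p)
   = t^3*SQ_m2 t w/((2+(2-g)*p)*(1+p)^2*((t+1)*(t+2))^5).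
Proof. unfold FVf, GVf, FCf, GCf, lam, a1c, a2c, a3c. replace (INR 2) with 2 by (simpl; lra). rewrite Hz, Hg, Hp. unfold SQ_m2. field. fin. Qed.
End Conn.


Lemma GV6_eq m g z : GV6 m g z = GVf m g z (V6 g z) (C6 g z).
Proof. unfold GV6. apply is_derive_unique. unfold Gf, GVf. auto_derive; [auto | ring]. Qed.
Lemma GC6_eq m g z : GC6 m g z = GCf m z (V6 g z) (C6 g z).
Proof. unfold GC6. apply is_derive_unique. unfold Gf, GCf. auto_derive; [auto | ring]. Qed.
Lemma FC6_eq m g z : 1 + V6 g z <> 0 -> FC6 m g z = FCf m g z (V6 g z) (C6 g z).
Proof. intros H. unfold FC6. apply is_derive_unique. unfold Ff, FCf. auto_derive; [auto | field; auto]. Qed.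
Lemma FV6_eq m g z : 1 + V6 g z <> 0 -> FV6 m g z = FVf m g z (V6 g z) (C6 g z).
Proof. intros H. unfold FV6. apply is_derive_unique. unfold Ff, FVf. auto_derive; [auto | field; auto]. Qed.


Lemma loc_dec (h : R -> R) x d : derivable_pt_lim h x d -> d < 0 ->
  exists eps, 0 < eps /\ (forall y, x < y < x + eps -> h y < h x) /\
                        (forall y, x - eps < y < x -> h x < h y).
Proof.
  intros Hd Hneg.
  destruct (Hd (- d / 2)) as [del Hdel]; [lra|].
  exists del. split; [apply cond_pos|]. split.
  - intros y Hy. assert (Hh : y - x <> 0) by lra.
    assert (Ha : Rabs (y - x) < del) by (rewrite Rabs_right; lra).
    specialize (Hdel (y - x) Hh Ha). replace (x + (y - x)) with y in Hdel by ring.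
    apply Rabs_def2 in Hdel. destruct Hdel as [H1 H2].
    assert (Hq : (h y - h x) / (y - x) < 0) by lra.
    assert (Hp : 0 < y - x) by lra.
    assert (h y - h x < 0).
    { replace (h y - h x) with ((h y - h x) / (y - x) * (y - x)) by (field; lra). nra. }
    lra.
  - intros y Hy. assert (Hh : y - x <> 0) by lra.
    assert (Ha : Rabs (y - x) < del) by (rewrite Rabs_left; lra).
    specialize (Hdel (y - x) Hh Ha). replace (x + (y - x)) with y in Hdel by ring.
    apply Rabs_def2 in Hdel. destruct Hdel as [H1 H2].
    assert (Hq : (h y - h x) / (y - x) < 0) by lra.
    assert (Hp : y - x < 0) by lra.
    assert (0 < h y - h x).
    { replace (h y - h x) with ((h y - h x) / (y - x) * (y - x)) by (field; lra). nra. }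
    lra.
Qed.

Lemma loc_cont (h : R -> R) x d : derivable_pt_lim h x d ->
  forall e, 0 < e -> exists del, 0 < del /\ forall y, Rabs (y - x) < del -> Rabs (h y - h x) < e.
Proof.
  intros Hd e He.
  destruct (Hd 1) as [del Hdel]; [lra|].
  exists (Rmin del (e / (Rabs d + 1))). split.
  { apply Rmin_pos; [apply cond_pos| apply Rdiv_lt_0_compat; [lra| pose proof (Rabs_pos d); lra]]. }
  intros y Hy.
  destruct (Req_dec (y - x) 0) as [H0|H0].
  { replace y with x by lra. rewrite Rminus_diag, Rabs_R0. lra. }
  assert (Hy1 : Rabs (y - x) < del) by (eapply Rlt_le_trans; [exact Hy| apply Rmin_l]).
  assert (Hy2 : Rabs (y - x) < e / (Rabs d + 1)) by (eapply Rlt_le_trans; [exact Hy| apply Rmin_r]).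
  specialize (Hdel (y - x) H0 Hy1). replace (x + (y - x)) with y in Hdel by ring.
  set (q := (h y - h x) / (y - x)) in *.
  assert (Hq : Rabs q < Rabs d + 1).
  { replace q with ((q - d) + d) by ring. eapply Rle_lt_trans; [apply Rabs_triang|]. lra. }
  assert (E : h y - h x = q * (y - x)) by (unfold q; field; auto).
  rewrite E, Rabs_mult.
  assert (0 < Rabs (y - x)) by (apply Rabs_pos_lt; auto).
  assert (Hpd : 0 < Rabs d + 1) by (pose proof (Rabs_pos d); lra).
  assert (Rabs (y - x) * (Rabs d + 1) < e).
  { apply (Rmult_lt_compat_r (Rabs d + 1)) in Hy2; auto.
    unfold Rdiv in Hy2. rewrite Rmult_assoc, Rinv_l in Hy2 by lra. lra. }
  pose proof (Rabs_pos q). nra.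
Qed.

Lemma barrier (f : R -> R) (a b K c : R) (phi : R -> R) :
  a < b -> f b = K - b -> derivable_pt_lim f b c -> -1 < c ->
  (forall V, a < V < b -> derivable_pt_lim f V (phi V)) ->
  (forall V, a < V < b -> f V = K - V -> -1 < phi V) ->
  forall V, a < V < b -> f V < K - V.
Proof.
  intros Hab Hfb Hdb Hc Hd Hphi.
  set (h := fun V => K - V - f V).
  assert (Hh : forall V d, derivable_pt_lim f V d -> derivable_pt_lim h V (-1 - d)).
  { intros V d HV. unfold h.
    apply derivable_pt_lim_minus; [| exact HV].
    replace (-1) with (0 - 1) by ring. apply derivable_pt_lim_minus.
    apply derivable_pt_lim_const. apply derivable_pt_lim_id. }
  assert (Hhb : h b = 0) by (unfold h; lra).
  destruct (loc_dec h b (-1 - c) (Hh b c Hdb) ltac:(lra)) as [e0 [He0 [_ Hleft]]].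
  intros V0 HV0.
  destruct (Rlt_or_le 0 (h V0)) as [Hpos|Hnpos]; [unfold h in Hpos; lra|].
  exfalso.
  set (S := fun x => V0 <= x < b /\ h x <= 0).
  assert (HSb : forall x, S x -> x <= b - e0).
  { intros x [Hx1 Hx2]. destruct (Rle_or_lt x (b - e0)) as [|Hlt]; auto.
    assert (Hlt2 : b - e0 < x < b) by lra. specialize (Hleft x Hlt2). lra. }
  destruct (completeness S) as [s [Hub Hlub]].
  { exists (b - e0). intros x Hx. apply HSb; auto. }
  { exists V0. split; lra. }
  assert (Hs1 : V0 <= s) by (apply Hub; split; lra).
  assert (Hs2 : s <= b - e0) by (apply Hlub; intros x Hx; apply HSb; auto).
  assert (Hsab : a < s < b) by lra.
  pose proof (Hh s (phi s) (Hd s Hsab)) as Hhs.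
  assert (Hhs0 : h s = 0).
  { destruct (Rtotal_order (h s) 0) as [Hneg|[Hz|Hpos]]; auto.
    - (* h s < 0: points to the right also negative *)
      destruct (loc_cont h s _ Hhs (- h s) ltac:(lra)) as [del [Hdel Hc1]].
      set (y := s + Rmin del (b - s) / 2).
      assert (Hmin : 0 < Rmin del (b - s)) by (apply Rmin_pos; lra).
      assert (Hy1 : s < y) by (unfold y; lra).
      assert (Hy2 : y < b) by (unfold y; pose proof (Rmin_r del (b - s)); lra).
      assert (Hy3 : Rabs (y - s) < del) by (unfold y; rewrite Rabs_right; pose proof (Rmin_l del (b - s)); lra).
      specialize (Hc1 y Hy3). apply Rabs_def2 in Hc1.
      assert (S y) by (split; lra).
      assert (y <= s) by (apply Hub; auto). lra.
    - destruct (loc_cont h s _ Hhs (h s) ltac:(lra)) as [del [Hdel Hc1]].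
      assert (Hsv : V0 < s). { destruct (Req_dec V0 s) as [E|E]; [subst; lra | lra]. }
      assert (Hub2 : is_upper_bound S (Rmax V0 (s - del / 2))).
      { intros x [Hx1 Hx2]. destruct (Rle_or_lt x (s - del/2)) as [Hl|Hl].
        - pose proof (Rmax_r V0 (s - del/2)); lra.
        - assert (x <= s) by (apply Hub; split; auto).
          assert (Rabs (x - s) < del) by (apply Rabs_def1; lra).
          specialize (Hc1 x H0). apply Rabs_def2 in Hc1. lra. }
      specialize (Hlub _ Hub2). unfold Rmax in Hlub. destruct (Rle_dec V0 (s - del/2)); lra. }
  assert (Hfs : f s = K - s) by (unfold h in Hhs0; lra).
  pose proof (Hphi s Hsab Hfs) as Hps.
  destruct (loc_dec h s (-1 - phi s) Hhs ltac:(lra)) as [e1 [He1 [Hright _]]].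
  set (y := s + Rmin e1 (b - s) / 2).
  assert (Hmin : 0 < Rmin e1 (b - s)) by (apply Rmin_pos; lra).
  assert (Hy1 : s < y < s + e1) by (unfold y; pose proof (Rmin_l e1 (b - s)); lra).
  assert (Hy2 : y < b) by (unfold y; pose proof (Rmin_r e1 (b - s)); lra).
  specialize (Hright y Hy1).
  assert (S y) by (split; lra).
  assert (y <= s) by (apply Hub; auto). lra.
Qed.

Lemma endpoint (f : R -> R) (a b K : R) : a < b ->
  filterlim f (at_right a) (locally (f a)) ->
  (forall V, a < V < b -> f V < K - V) -> f a <= K - a.
Proof.
  intros Hab Hlim Hlt.
  destruct (Rle_or_lt (f a) (K - a)) as [|Hgt]; auto. exfalso.
  assert (He : 0 < (f a - (K - a)) / 2) by lra.
  apply filterlim_locally with (eps := mkposreal _ He) in Hlim.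
  destruct Hlim as [del Hdel].
  set (y := a + Rmin del (b - a) / 2).
  assert (Hmin : 0 < Rmin del (b - a)) by (apply Rmin_pos; [apply cond_pos| lra]).
  assert (Hy1 : a < y) by (unfold y; lra).
  assert (Hy2 : y < b) by (unfold y; pose proof (Rmin_r del (b - a)); lra).
  assert (Hb : ball a del y).
  { unfold ball; simpl. unfold AbsRing_ball, abs, minus, plus, opp; simpl.
    rewrite Rabs_right; unfold y; pose proof (Rmin_l del (b - a)); lra. }
  specialize (Hdel y Hb Hy1). unfold ball in Hdel; simpl in Hdel.
  unfold AbsRing_ball, abs, minus, plus, opp in Hdel; simpl in Hdel.
  apply Rabs_def2 in Hdel.
  specialize (Hlt y (conj Hy1 Hy2)). lra.
Qed.


Lemma sq_lt a b : 0 <= b -> a^2 < b^2 -> a < b.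
Proof. intros. nra. Qed.

Lemma zg_bounds m g : (m = 1%nat \/ m = 2%nat) -> 1 < g <= 2 ->
  zmin g < zg m g /\ zg m g < (g-1)/(g*(3*g-2)).
Proof.
  intros Hm Hg. set (t := g - 1). assert (Ht : 0 < t <= 1) by (unfold t; lra).
  replace g with (1 + t) by (unfold t; ring). clearbody t. clear Hg.
  unfold zmin, zg. destruct Hm as [-> | ->]; simpl Nat.eqb; cbv iota.
  - set (R0 := (1+t)^2 + (1+t-1)^2).
    assert (HR0 : 0 <= R0) by (unfold R0; nra).
    set (s := sqrt R0). assert (Hs0 : 0 <= s) by apply sqrt_pos.
    assert (Hs2 : s^2 = R0) by (unfold s; rewrite <- Rsqr_pow2; apply Rsqr_sqrt; auto).
    unfold R0 in Hs2. clearbody s.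
    assert (Hq : 0 < (2*(1+t)-1)*(1+t+1)) by nra.
    assert (Hd : 0 < (1+t)*(1+t-1)) by nra.
    assert (Hr : 0 < 3*(1+t)-2) by nra.
    split.
    + set (A := ((1+t-1)/((2*(1+t)-1)*(1+t+1))) * ((1+t)*(1+t-1)) + (1+t)).
      assert (HA : A * ((2*(1+t)-1)*(1+t+1)) = (1+t)*t^2 + (1+t)*((2*(1+t)-1)*(1+t+1))) by (unfold A; field; lra).
      assert (HAs : A < s).
      { apply sq_lt; auto.
        assert (P : ((1+t)*t^2 + (1+t)*((2*(1+t)-1)*(1+t+1)))^2 < ((2*(1+t)-1)*(1+t+1))^2 * s^2).
        { rewrite Hs2. assert (X : 0 < t^3*(2+4*t-t^3)). { apply Rmult_lt_0_compat. apply pow_lt; lra. nra. }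
          assert (E : ((2*(1+t)-1)*(1+t+1))^2 * ((1+t)^2 + (1+t-1)^2) - ((1+t)*t^2 + (1+t)*((2*(1+t)-1)*(1+t+1)))^2 = t^3*(2+4*t-t^3)) by ring. lra. }
        rewrite <- HA in P. rewrite Rpow_mult_distr in P. apply (Rmult_lt_reg_r (((2*(1+t)-1)*(1+t+1))^2)); [apply pow_lt; lra| lra]. }
      apply (Rmult_lt_reg_r ((1+t)*(1+t-1))); auto.
      unfold Rdiv at 2. rewrite Rmult_assoc, Rinv_l by lra. unfold A in HAs. lra.
    + set (B := ((1+t-1)/((1+t)*(3*(1+t)-2))) * ((1+t)*(1+t-1)) + (1+t)).
      assert (HB : B * (3*(1+t)-2) = (1+t)*(3*(1+t)-2) + t^2) by (unfold B; field; lra).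
      assert (HBs : s < B).
      { apply sq_lt. { assert (0 <= B * (3*(1+t)-2)) by (rewrite HB; nra). nra. }
        assert (P : (3*(1+t)-2)^2 * s^2 < ((1+t)*(3*(1+t)-2) + t^2)^2).
        { rewrite Hs2. assert (X : 0 < t^2*(1+2*t-2*t^2)). { apply Rmult_lt_0_compat. nra. nra. }
          assert (E : ((1+t)*(3*(1+t)-2) + t^2)^2 - (3*(1+t)-2)^2 * ((1+t)^2 + (1+t-1)^2) = t^2*(1+2*t-2*t^2)) by ring. lra. }
        rewrite <- HB in P. rewrite Rpow_mult_distr in P. apply (Rmult_lt_reg_r ((3*(1+t)-2)^2)); [apply pow_lt; lra| lra]. }
      apply (Rmult_lt_reg_r ((1+t)*(1+t-1))); auto.
      unfold Rdiv at 1. rewrite Rmult_assoc, Rinv_l by lra. unfold B in HBs. lra.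
  - set (b0 := 2*(1+t)^2 - (1+t) + 1). set (Q := 4*(1+t)*(1+t-1) + 8/3).
    set (R0 := b0^2 + 2*(1+t)*(1+t-1)*Q).
    assert (HQ : 0 < Q) by (unfold Q; nra). assert (Hb0 : 0 < b0) by (unfold b0; nra).
    assert (HR0 : 0 <= R0) by (unfold R0; nra).
    set (s := sqrt R0). assert (Hs0 : 0 <= s) by apply sqrt_pos.
    assert (Hs2 : s^2 = R0) by (unfold s; rewrite <- Rsqr_pow2; apply Rsqr_sqrt; auto).
    unfold R0 in Hs2. clearbody s.
    assert (Hq : 0 < (2*(1+t)-1)*(1+t+1)) by nra.
    assert (Hd : 0 < (1+t)*Q) by nra.
    assert (Hr : 0 < 3*(1+t)-2) by nra.
    split.
    + set (A := ((1+t-1)/((2*(1+t)-1)*(1+t+1))) * ((1+t)*Q) + b0).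
      assert (HA : A * ((2*(1+t)-1)*(1+t+1)) = b0*((2*(1+t)-1)*(1+t+1)) + (1+t)*Q*t) by (unfold A; field; lra).
      assert (HAs : A < s).
      { apply sq_lt; auto.
        assert (P : (b0*((2*(1+t)-1)*(1+t+1)) + (1+t)*Q*t)^2 < ((2*(1+t)-1)*(1+t+1))^2 * s^2).
        { rewrite Hs2. unfold b0, Q.
          assert (0 < t^2*(128/9 + 640/9*t + 1184/9*t^2 + 352/3*t^3 + 80/3*t^4 - 32*t^5 - 16*t^6)).
          { apply Rmult_lt_0_compat. nra. assert (0 < t^4) by (apply pow_lt; lra). assert (t^5 <= t^4) by (replace (t^5) with (t^4*t) by ring; nra). assert (t^6 <= t^4) by (replace (t^6) with (t^4*(t*t)) by ring; nra). assert (0 < t^2) by nra. assert (0 < t^3) by (apply pow_lt; lra). assert (0 < t^4) by (apply pow_lt; lra). nra. }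
          assert (E : ((2*(1+t)-1)*(1+t+1))^2 * ((2*(1+t)^2 - (1+t) + 1)^2 + 2*(1+t)*(1+t-1)*(4*(1+t)*(1+t-1) + 8/3)) - ((2*(1+t)^2 - (1+t) + 1)*((2*(1+t)-1)*(1+t+1)) + (1+t)*(4*(1+t)*(1+t-1) + 8/3)*t)^2 = t^2*(128/9 + 640/9*t + 1184/9*t^2 + 352/3*t^3 + 80/3*t^4 - 32*t^5 - 16*t^6)) by field. lra. }
        rewrite <- HA in P. rewrite Rpow_mult_distr in P. apply (Rmult_lt_reg_r (((2*(1+t)-1)*(1+t+1))^2)); [apply pow_lt; lra| lra]. }
      apply (Rmult_lt_reg_r ((1+t)*Q)); auto.
      unfold Rdiv at 2. rewrite Rmult_assoc, Rinv_l by lra. unfold A in HAs. lra.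
    + set (B := ((1+t-1)/((1+t)*(3*(1+t)-2))) * ((1+t)*Q) + b0).
      assert (HB : B * (3*(1+t)-2) = b0*(3*(1+t)-2) + Q*t) by (unfold B; field; lra).
      assert (HBs : s < B).
      { apply sq_lt. { assert (0 <= B * (3*(1+t)-2)) by (rewrite HB; nra). nra. }
        assert (P : (3*(1+t)-2)^2 * s^2 < (b0*(3*(1+t)-2) + Q*t)^2).
        { rewrite Hs2. unfold b0, Q.
          assert (0 < t*(16/3 + 232/9*t + 24*t^2 + 16/3*t^3 - 24*t^4 - 8*t^5)).
          { apply Rmult_lt_0_compat. lra. assert (0 < t^2) by nra. assert (0 < t^3) by (apply pow_lt; lra). assert (t^4 <= t^2) by (replace (t^4) with (t^2*(t*t)) by ring; nra). assert (t^5 <= t^3) by (replace (t^5) with (t^3*(t*t)) by ring; nra). assert (0 < t^2) by nra. assert (0 < t^3) by (apply pow_lt; lra). nra. }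
          assert (E : ((2*(1+t)^2 - (1+t) + 1)*(3*(1+t)-2) + (4*(1+t)*(1+t-1) + 8/3)*t)^2 - (3*(1+t)-2)^2 * ((2*(1+t)^2 - (1+t) + 1)^2 + 2*(1+t)*(1+t-1)*(4*(1+t)*(1+t-1) + 8/3)) = t*(16/3 + 232/9*t + 24*t^2 + 16/3*t^3 - 24*t^4 - 8*t^5)) by field. lra. }
        rewrite <- HB in P. rewrite Rpow_mult_distr in P. apply (Rmult_lt_reg_r ((3*(1+t)-2)^2)); [apply pow_lt; lra| lra]. }
      apply (Rmult_lt_reg_r ((1+t)*Q)); auto.
      unfold Rdiv at 1. rewrite Rmult_assoc, Rinv_l by lra. unfold B in HBs. lra.
Qed.


Lemma p_props g z : 1 < g <= 2 -> zmin g <= z -> z < (g-1)/(g*(3*g-2)) ->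
  z*(2+(2-g)*V6 g z) = - V6 g z*(1+V6 g z) /\ V1g g <= V6 g z /\ V6 g z < -1/g.
Proof.
  intros Hg Hz1 Hz2.
  assert (Hzm : 0 < zmin g) by (unfold zmin; apply Rdiv_lt_0_compat; nra).
  assert (Hz0 : 0 < z) by lra.
  assert (Hg3 : 0 < g*(3*g-2)) by nra.
  assert (Hzb : z * (g*(3*g-2)) < g - 1).
  { apply (Rmult_lt_compat_r (g*(3*g-2))) in Hz2; auto. unfold Rdiv in Hz2. rewrite Rmult_assoc, Rinv_l in Hz2 by lra. lra. }
  assert (Hz13 : z < 1/3).
  { assert (g - 1 < g*(3*g-2)/3) by nra. destruct (Rlt_or_le z (1/3)) as [|Hc]; auto. exfalso. assert (z*(g*(3*g-2)) >= 1/3*(g*(3*g-2))) by (apply Rle_ge; apply Rmult_le_compat_r; lra). lra. }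
  set (R0 := 1 - 2*(g+2)*z + (g-2)^2*z^2).
  assert (H2z : 2*(g+2)*z < 1).
  { destruct (Rlt_or_le (2*(g+2)*z) 1) as [|Hc]; auto. exfalso.
    assert (2*(g+2)*z*(g*(3*g-2)) >= 1*(g*(3*g-2))) by (apply Rle_ge; apply Rmult_le_compat_r; lra). nra. }
  assert (HR : 0 < R0) by (unfold R0; nra).
  unfold V6, wz. fold R0.
  set (w := sqrt R0). assert (Hw0 : 0 < w) by (apply sqrt_lt_R0; auto).
  assert (Hw2 : w^2 = R0) by (unfold w; rewrite <- Rsqr_pow2; apply Rsqr_sqrt; lra).
  unfold R0 in Hw2. clearbody w.
  split; [| split].
  - nra.
  - unfold V1g.
    assert (Hzm' : (g-1) <= z * ((2*g-1)*(g+1))).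
    { unfold zmin in Hz1. apply (Rmult_le_compat_r ((2*g-1)*(g+1))) in Hz1; [|nra].
      unfold Rdiv in Hz1. rewrite Rmult_assoc, Rinv_l in Hz1 by nra. lra. }
    set (M := -1 + (g-2)*z + 4/(g+1)).
    assert (HM : 0 <= M).
    { unfold M. assert (4/(g+1) >= 4/3). { apply Rle_ge. apply Rmult_le_compat_l; [lra|]. apply Rinv_le_contravar; lra. } nra. }
    assert (HM2 : M^2 - (1 - 2*(g+2)*z + (g-2)^2*z^2) = 8*(2*g-1)/(g+1)^2 * (z*((2*g-1)*(g+1)) - (g-1)) / (2*g-1)).
    { unfold M. field. split; lra. }
    assert (0 <= 8*(2*g-1)/(g+1)^2 * (z*((2*g-1)*(g+1)) - (g-1)) / (2*g-1)).
    { apply Rmult_le_pos; [| left; apply Rinv_0_lt_compat; lra].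
      apply Rmult_le_pos; [| lra]. apply Rmult_le_pos; [lra|]. left; apply Rinv_0_lt_compat; nra. }
    assert (w <= M) by nra.
    unfold M in *. assert (-2/(g+1) = - (4/(g+1))/2) by (field; lra). lra.
  - set (N := -1 + (g-2)*z + 2/g).
    assert (HN2 : (1 - 2*(g+2)*z + (g-2)^2*z^2) - N^2 = 4*((g-1) - z*(g*(3*g-2)))/g^2).
    { unfold N. field. lra. }
    assert (0 < 4*((g-1) - z*(g*(3*g-2)))/g^2) by (apply Rdiv_lt_0_compat; nra).
    assert (N < w) by nra.
    unfold N in *. assert (-1/g = - (2/g)/2) by (field; lra). lra.
Qed.


Section S.
Variables (t w g p z : R).
Hypotheses (Hg : g = 1 + t) (Hp : p = -1 + t*(t+1+w)/((t+1)*(t+2)))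
  (Hz : z = - p*(1+p)/(2+(2-g)*p)) (Ht0 : 0 < t) (Ht1 : t <= 1) (Hw0 : 0 < w) (Hw1 : w <= 1).

Lemma basic_pos : 0 < (t+1)*(t+2) /\ 0 < 1 + p /\ 0 < 2+(2-g)*p.
Proof.
  assert (HE : 0 < (t+1)*(t+2)) by nra.
  assert (Hp1 : 0 < 1 + p). { rewrite Hp. assert (0 < t*(t+1+w)/((t+1)*(t+2))) by (apply Rdiv_lt_0_compat; nra). lra. }
  split; auto. split; auto. nra.
Qed.

Lemma signs_P6 m : (m = 1%nat \/ m = 2%nat) ->
  GCf m z p (1+p) < 0 /\ FVf m g z p (1+p) < 0 /\
  0 < FVf m g z p (1+p) + GVf m g z p (1+p) - FCf m g z p (1+p) - GCf m z p (1+p).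
Proof.
  intros Hm. destruct basic_pos as [HE [Hp1 HD]].
  assert (Hden : 0 < (2+(2-g)*p)*(1+p)^2*((t+1)*(t+2))^5).
  { apply Rmult_lt_0_compat; [apply Rmult_lt_0_compat; [lra | apply pow_lt; lra] | apply pow_lt; lra]. }
  assert (Ht3 : 0 < t^3) by (apply pow_lt; lra). assert (Ht4 : 0 < t^4) by (apply pow_lt; lra).
  destruct Hm as [-> | ->].
  - rewrite (conn_Q1 t w g p z), (conn_GC1 t w g p z), (conn_FV1 t w g p z); auto.
    pose proof (SGC_m1_sign t w Ht0 Ht1 Hw0 Hw1). pose proof (SFV_m1_sign t w Ht0 Ht1 Hw0 Hw1).
    pose proof (SQ_m1_sign t w Ht0 Ht1 Hw0 Hw1).
    split; [|split].
    + apply neg_frac; auto. nra.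
    + apply neg_frac; auto. nra.
    + apply pos_frac; auto. nra.
  - rewrite (conn_Q2 t w g p z), (conn_GC2 t w g p z), (conn_FV2 t w g p z); auto.
    pose proof (SGC_m2_sign t w Ht0 Ht1 Hw0 Hw1). pose proof (SFV_m2_sign t w Ht0 Ht1 Hw0 Hw1).
    pose proof (SQ_m2_sign t w Ht0 Ht1 Hw0 Hw1).
    split; [|split].
    + apply neg_frac; auto. nra.
    + apply neg_frac; auto. nra.
    + apply pos_frac; auto. nra.
Qed.

Lemma signs_bar m v u : (m = 1%nat \/ m = 2%nat) -> u = v*t*w/((t+1)*(t+2)) -> 0 < v -> v < 1 ->
  Gf m g z (p-u) (1+p+u) < 0 /\ -1 < Ff m g z (p-u) (1+p+u) / Gf m g z (p-u) (1+p+u).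
Proof.
  intros Hm Hu Hv0 Hv1. destruct basic_pos as [HE [Hp1 HD]].
  assert (Hu0 : 0 < u) by (rewrite Hu; apply Rdiv_lt_0_compat; [apply Rmult_lt_0_compat; [apply Rmult_lt_0_compat|]|]; lra).
  assert (HV : 0 < 1 + (p - u)).
  { assert (0 < t*(w*(1-v))) by (apply Rmult_lt_0_compat; [lra| apply Rmult_lt_0_compat; lra]).
    rewrite Hu, Hp. assert (0 < (t*(t+1+w) - v*t*w)/((t+1)*(t+2))) by (apply Rdiv_lt_0_compat; nra).
    replace (1 + (-1 + t*(t+1+w)/((t+1)*(t+2)) - v*t*w/((t+1)*(t+2)))) with ((t*(t+1+w) - v*t*w)/((t+1)*(t+2))) by (field; lra). lra. }
  assert (Hd3 : 0 < (2+(2-g)*p)*((t+1)*(t+2))^3) by (apply Rmult_lt_0_compat; [lra | apply pow_lt; lra]).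
  assert (Hd4 : 0 < (1+(p-u))*(2+(2-g)*p)*((t+1)*(t+2))^4) by (apply Rmult_lt_0_compat; [nra | apply pow_lt; lra]).
  assert (Ht2 : 0 < t^2) by nra.
  assert (Hfin : forall F G, G < 0 -> F + G < 0 -> G < 0 /\ -1 < F / G).
  { intros F G HG HFG. split; auto. replace (F / G) with (-1 + (F + G)/(-G)*(-1)) by (field; lra).
    assert (0 < (F+G)/(-G)*(-1)). { replace ((F+G)/(-G)*(-1)) with ((-(F+G))/(-G)) by (field; lra). apply Rdiv_lt_0_compat; lra. } lra. }
  destruct Hm as [-> | ->].
  - apply Hfin.
    + rewrite (conn_G1 t w v g p u z); auto. pose proof (SG1_m1_sign t w v Ht0 Ht1 Hw0 Hw1 Hv0 Hv1). apply neg_frac; auto.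
      assert (0 < u*t) by nra. nra.
    + rewrite (conn_H1 t w v g p u z); auto. pose proof (SH1_m1_sign t w v Ht0 Ht1 Hw0 Hw1 Hv0 Hv1). apply neg_frac; auto.
      assert (0 < u*t^2) by nra. nra.
  - apply Hfin.
    + rewrite (conn_G2 t w v g p u z); auto. pose proof (SG1_m2_sign t w v Ht0 Ht1 Hw0 Hw1 Hv0 Hv1). apply neg_frac; auto.
      assert (0 < u*t) by nra. nra.
    + rewrite (conn_H2 t w v g p u z); auto. pose proof (SH1_m2_sign t w v Ht0 Ht1 Hw0 Hw1 Hv0 Hv1). apply neg_frac; auto.
      assert (0 < u*t^2) by nra. nra.
Qed.
End S.


Lemma C1_bounds g p : 1 < g <= 2 -> p < -1/g ->
  1 + V1g g < C1g g /\ 1 + 2*p - V1g g < C1g g.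
Proof.
  intros Hg Hp. unfold V1g, C1g.
  set (s := sqrt (2*g*(g-1))).
  assert (Hs0 : 0 <= s) by apply sqrt_pos.
  assert (Hs2 : s^2 = 2*g*(g-1)) by (unfold s; rewrite <- Rsqr_pow2; apply Rsqr_sqrt; nra).
  clearbody s.
  assert (Hg1 : g - 1 < s) by (apply sq_lt; auto; nra).
  assert (Hg2 : (g-1)*(g+2) <= s * g).
  { assert (0 <= s*g) by nra. apply Rsqr_incr_0_var; [| auto]. rewrite !Rsqr_pow2.
    replace ((s*g)^2) with (s^2*g^2) by ring. rewrite Hs2.
    assert (0 <= (g-1)*((g+1)*(g-2)^2)) by (apply Rmult_le_pos; [lra| apply Rmult_le_pos; [lra| apply pow2_ge_0]]).
    assert (E : 2*g*(g-1)*g^2 - ((g-1)*(g+2))^2 = (g-1)*((g+1)*(g-2)^2)) by ring. lra. }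
  split.
  - replace (1 + - 2/(g+1)) with ((g-1)/(g+1)) by (field; lra).
    unfold Rdiv. apply Rmult_lt_compat_r; [apply Rinv_0_lt_compat; lra | lra].
  - assert (H1 : 1 + 2*p - (-2/(g+1)) < 1 + 2*(-1/g) + 2/(g+1)).
    { assert (-2/(g+1) = - (2/(g+1))) by (field; lra). lra. }
    assert (H2 : 1 + 2*(-1/g) + 2/(g+1) = ((g-1)*(g+2))/(g*(g+1))) by (field; lra).
    assert (H3 : ((g-1)*(g+2))/(g*(g+1)) <= s/(g+1)).
    { replace (s/(g+1)) with ((s*g)/(g*(g+1))) by (field; lra).
      unfold Rdiv. apply Rmult_le_compat_r; [left; apply Rinv_0_lt_compat; nra | lra]. }
    lra.
Qed.

Lemma core m g z f : (m = 1%nat \/ m = 2%nat) -> 1 < g <= 2 ->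
  zmin g <= z <= zg m g -> is_C_P6 m g z f -> f (V1g g) < C1g g.
Proof.
  intros Hm Hg [Hz1 Hz2] HC.
  destruct (zg_bounds m g Hm Hg) as [_ Hzb].
  destruct (p_props g z Hg Hz1 ltac:(lra)) as [Hrel [HpV1 Hpb]].
  destruct (C1_bounds g (V6 g z) Hg Hpb) as [Hc1a Hc1b].
  destruct HC as [Hpos [_ [Hf6 [[c [Hns Hdc]] [Hode Hlim]]]]].
  set (p := V6 g z) in *.
  assert (HC6 : C6 g z = 1 + p) by reflexivity.
  rewrite HC6 in Hf6.
  destruct HpV1 as [Hlt | Heq].
  2:{ rewrite <- Heq in Hf6. rewrite Hf6. lra. }
  set (t := g - 1).
  assert (Ht0 : 0 < t) by (unfold t; lra). assert (Ht1 : t <= 1) by (unfold t; lra).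
  assert (Hgt : g = 1 + t) by (unfold t; ring).
  assert (HV1 : V1g g = -2/(t+2)) by (unfold V1g; rewrite Hgt; field; lra).
  set (w := (1+p)*(t+1)*(t+2)/t - (t+1)).
  assert (Hpw : p = -1 + t*(t+1+w)/((t+1)*(t+2))) by (unfold w; field; lra).
  assert (Hp1 : -1 < p).
  { assert (H2 : 2/(t+2) < 1) by (apply (Rmult_lt_reg_r (t+2)); [lra|]; unfold Rdiv; rewrite Rmult_assoc, Rinv_l by lra; lra).
    assert (-2/(t+2) = -(2/(t+2))) by (field; lra). rewrite HV1 in Hlt. lra. }
  assert (HD : 0 < 2 + (2-g)*p) by nra.
  assert (Hzp : z = - p*(1+p)/(2+(2-g)*p)) by (apply (Rmult_eq_reg_r (2+(2-g)*p)); [|lra]; rewrite Hrel; field; lra).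
  assert (Hw0 : 0 < w).
  { unfold w. assert (Hq : t/(t+2) < 1 + p).
    { rewrite HV1 in Hlt. replace (t/(t+2)) with (1 + -2/(t+2)) by (field; lra). lra. }
    assert (HH : t < (1+p)*(t+2)).
    { apply (Rmult_lt_compat_r (t+2)) in Hq; [|lra]. unfold Rdiv in Hq. rewrite Rmult_assoc, Rinv_l in Hq by lra. lra. }
    replace ((1+p)*(t+1)*(t+2)/t - (t+1)) with ((t+1)*((1+p)*(t+2) - t)/t) by (field; lra).
    apply Rdiv_lt_0_compat; nra. }
  assert (Hw1 : w <= 1).
  { unfold w. assert (Hq : 1 + p < t/(t+1)).
    { rewrite Hgt in Hpb. replace (t/(t+1)) with (1 + -1/(1+t)) by (field; lra). lra. }
    assert (HH : (1+p)*(t+1) < t).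
    { apply (Rmult_lt_compat_r (t+1)) in Hq; [|lra]. unfold Rdiv in Hq. rewrite Rmult_assoc, Rinv_l in Hq by lra. lra. }
    replace ((1+p)*(t+1)*(t+2)/t - (t+1)) with ((t+2)*((1+p)*(t+1))/t - (t+1)) by (field; lra).
    assert ((t+2)*((1+p)*(t+1))/t < (t+2)) .
    { apply (Rmult_lt_reg_r t); auto. unfold Rdiv. rewrite Rmult_assoc, Rinv_l by lra. nra. }
    lra. }
  destruct (signs_P6 t w g p z Hgt Hpw Hzp Ht0 Ht1 Hw0 Hw1 m Hm) as [HGC [HFV HQ]].
  destruct Hns as [Hc0 Hquad].
  rewrite GV6_eq, GC6_eq, FC6_eq, FV6_eq in Hquad by (fold p; lra).
  fold p in Hquad. rewrite HC6 in Hquad.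
  assert (Hcm1 : -1 < c).
  { set (a := - GCf m z p (1+p)) in *. set (b := FCf m g z p (1 + p) - GVf m g z p (1 + p)) in *.
    set (q0 := FVf m g z p (1+p)) in *.
    assert (Ha : 0 < a) by (unfold a; lra).
    assert (HQ' : 0 < a - b + q0) by (unfold a, b, q0 in *; lra).
    destruct (Rlt_or_le (-1) c) as [|Hc]; auto. exfalso.
    assert (E1 : a*c^2 + b*c + q0 = 0) by (unfold a, b, q0 in *; lra).
    assert (E2 : (c+1)*(a*(c-1)+b) = - (a - b + q0)) by nra.
    assert (Hc1 : c + 1 < 0).
    { destruct (Req_dec (c+1) 0) as [E|E]. { rewrite E in E2. lra. } lra. }
    assert (Hk : 0 < a*(c-1)+b) by nra.
    assert (E3 : q0 = - c*(a*c + b)) by nra.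
    nra. }
  assert (Hbar : forall V, V1g g < V < p -> f V < (1 + 2*p) - V).
  { apply (barrier f (V1g g) p (1+2*p) c (fun V => Ff m g z V (f V) / Gf m g z V (f V))); auto.
    - lra.
    - apply is_derive_Reals; auto.
    - intros V HV. apply is_derive_Reals. apply (proj2 (Hode V HV)).
    - intros V HV HfV. rewrite HfV.
      set (u := p - V). set (v := u / (p - V1g g)).
      assert (HpV : p - V1g g = t*w/((t+1)*(t+2))).
      { rewrite HV1, Hpw. field. lra. }
      assert (Hu : u = v*t*w/((t+1)*(t+2))).
      { unfold v. rewrite HpV. field. assert (0 < t*w) by nra. split; [lra|]. split; [lra|]. nra. }
      assert (Hv0 : 0 < v) by (unfold v, u; apply Rdiv_lt_0_compat; lra).
      assert (Hv1 : v < 1).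
      { unfold v, u. apply (Rmult_lt_reg_r (p - V1g g)); [lra|]. unfold Rdiv. rewrite Rmult_assoc, Rinv_l by lra. lra. }
      destruct (signs_bar t w g p z Hgt Hpw Hzp Ht0 Ht1 Hw0 Hw1 m v u Hm Hu Hv0 Hv1) as [_ Hr].
      replace V with (p - u) by (unfold u; ring).
      replace (1 + 2*p - (p - u)) with (1 + p + u) by ring. exact Hr. }
  pose proof (endpoint f (V1g g) p (1 + 2*p) Hlt Hlim Hbar). lra.
Qed.

Theorem mainTheorem12 (m : nat) (gam : R) :
  (m = 1%nat \/ m = 2%nat) -> 1 < gam <= 2 ->
  zmin gam < zg m gam /\
  (forall z f, zmin gam <= z <= zg m gam -> is_C_P6 m gam z f ->
     f (V1g gam) < C1g gam) /\
  (forall z f, zmin gam <= z <= zM gam -> is_C_P6 m gam z f ->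
     f (V1g gam) = C1g gam -> zg m gam < z <= zM gam).
Proof.
  intros Hm Hg.
  destruct (zg_bounds m gam Hm Hg) as [H1 _].
  split; [exact H1|]. split.
  - intros z f Hz HC. exact (core m gam z f Hm Hg Hz HC).
  - intros z f Hz HC Heq. split; [| lra].
    destruct (Rlt_or_le (zg m gam) z) as [|Hle]; auto. exfalso.
    pose proof (core m gam z f Hm Hg (conj (proj1 Hz) Hle) HC). lra.
Qed.
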